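(* Under Strategy 2A (described in the context), let $V(\omega)$ be the number of uncles created during the attack cycle $\omega$ that are referred by nephew blocks in an attack cycle strictly after $\omega$. Then $$\mathbb{E}[V]=pq^2\cdot\frac{1-(pq)^{n_1-1}}{1-pq}.$$
   Context: Honest hashrate $p$, attacker hashrate $q$, $p+q=1$, $0<q<p$; $\gamma\in[0,1]$ is the fraction of honest hashrate mining on the attacker's block during a public competition between equal-height blocks. Attack cycles are i.i.d. words in S (attacker block) and H (honest block): H, SHS, SHH, or SSwH with $w$ a Dyck word; $\mathbb{P}[H]=p$, $\mathbb{P}[SHS]=pq^2$, $\mathbb{P}[SHH]=p^2q$, $\mathbb{P}[SSwH]=q^2p(pq)^{|w|}$ ($|w|$ half the length of $w$). Ethereum rules: an uncle is a non-official block whose parent is official; a nephew (official block) may refer an uncle at distance (height difference) at most $n_1$ ($n_1\ge2$ an integer). Strategy 2A (''brutal fork''): the attacker keeps his whole fork secret and releases it all at once at the end of the attack cycle, when an honest block would reduce his advance to one block (after a single attacker block, he publishes it to compete with the honest block); the attacker's fork wins in cycles starting with SS; all miners refer all possible uncles. *)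

(* Defs.v *)
From Stdlib Require Import Reals List Arith Bool.
Open Scope bool_scope.
Import ListNotations.

(** Each newly mined block is an i.i.d. letter:
   - [LA]  : block mined by the attacker                      (prob. q)
   - [LHg] : block mined by the fraction gamma of the honest
             hashrate which, during a public competition between
             two equal-height tips, mines on the attacker's block (prob. p*gamma)
   - [LHn] : block mined by the remaining honest hashrate     (prob. p*(1-gamma))
   Summing over [LHg]/[LHn] gives the letter H of the paper (prob. p). *)
Inductive letter := LA | LHg | LHn.

(** A block: height, parent id ([None] only for the genesis block),
    miner, index of the attack cycle during which it was mined
    (0 for the genesis block, cycles numbered 1,2,...), and the list of
    block ids it refers to as uncles. Block ids are positions in the
    list of all blocks (in mining order). *)
Record block := mkBlock {
  b_height : nat;
  b_parent : option nat;
  b_attacker : bool;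
  b_cycle : nat;
  b_refs : list nat }.

Definition get (bs : list block) (i : nat) : option block := nth_error bs i.

Definition height (bs : list block) (i : nat) : nat :=
  match get bs i with Some b => b_height b | None => 0%nat end.

Definition refs (bs : list block) (i : nat) : list nat :=
  match get bs i with Some b => b_refs b | None => [] end.

Definition parent (bs : list block) (i : nat) : option nat :=
  match get bs i with Some b => b_parent b | None => None end.

Definition cycle_of (bs : list block) (i : nat) : nat :=
  match get bs i with Some b => b_cycle b | None => 0%nat end.

Fixpoint ancestors_fuel (bs : list block) (fuel i : nat) : list nat :=
  match fuel with
  | O => [i]
  | S f => i :: match parent bs i with
                | Some j => ancestors_fuel bs f j
                | None => []
                end
  end.

Definition ancestors (bs : list block) (i : nat) : list nat :=
  ancestors_fuel bs (length bs) i.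

Definition memb (i : nat) (l : list nat) : bool := existsb (Nat.eqb i) l.

Inductive phase :=
  | Idle                          (* no fork: attacker mines on the official tip *)
  | One (a : nat)                 (* attacker has one secret block [a] *)
  | Tie (a h : nat)               (* public competition: attacker block [a] vs honest block [h] *)
  | Fork (ach hch : list nat).    (* attacker secret chain [ach] (>= 2 blocks),
                                     public honest chain [hch]; most recent first *)

Record state := mkState {
  st_blocks : list block;
  st_secret : list nat;   (* unpublished attacker blocks *)
  st_tip : nat;           (* official tip at the start of the current cycle *)
  st_cycle : nat;
  st_phase : phase }.

(** Uncles referred by a new block mined on [par] at height [hb]:
    "all miners refer all possible uncles" (Ethereum rules): every block [u]
    visible to the miner whose parent is an ancestor of the new block, which
    is not itself an ancestor, whose distance to the new block is at most
    [n1], and which has not already been referred by an ancestor. *)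
Definition uncle_refs (n1 : nat) (bs : list block) (secret : list nat)
    (attacker : bool) (par hb : nat) : list nat :=
  let anc := ancestors bs par in
  filter (fun u =>
    (attacker || negb (memb u secret)) &&
    match parent bs u with Some x => memb x anc | None => false end &&
    negb (memb u anc) &&
    Nat.leb (hb - height bs u) n1 &&
    forallb (fun a => negb (memb u (refs bs a))) anc)
    (seq 0 (length bs)).

Definition mine (n1 : nat) (st : state) (par : nat) (attacker : bool)
    : list block * nat :=
  let bs := st_blocks st in
  let hb := S (height bs par) in
  let b := mkBlock hb (Some par) attacker (st_cycle st)
             (uncle_refs n1 bs (st_secret st) attacker par hb) in
  (bs ++ [b], length bs).

Definition step (n1 : nat) (st : state) (l : letter) : state :=
  let t := st_tip st in
  let c := st_cycle st in
  match st_phase st, l with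
  | Idle, LA =>
      let (bs, a) := mine n1 st t true in
      mkState bs (a :: st_secret st) t c (One a)
  | Idle, _ =>
      let (bs, h) := mine n1 st t false in
      mkState bs (st_secret st) h (S c) Idle
  | One a, LA =>
      let (bs, a2) := mine n1 st a true in
      mkState bs (a2 :: st_secret st) t c (Fork [a2; a] [])
  | One a, _ =>
      (* honest block on the public tip; the attacker then publishes [a] *)
      let (bs, h) := mine n1 st t false in
      mkState bs [] t c (Tie a h)
  | Tie a h, LA =>
      let (bs, a2) := mine n1 st a true in
      mkState bs (st_secret st) a2 (S c) Idle
  | Tie a h, LHg =>
      let (bs, x) := mine n1 st a false in
      mkState bs (st_secret st) x (S c) Idle
  | Tie a h, LHn =>
      let (bs, x) := mine n1 st h false in
      mkState bs (st_secret st) x (S c) Idle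
  | Fork ach hch, LA =>
      let (bs, a2) := mine n1 st (hd t ach) true in
      mkState bs (a2 :: st_secret st) t c (Fork (a2 :: ach) hch)
  | Fork ach hch, _ =>
      let (bs, h) := mine n1 st (hd t hch) false in
      if Nat.eqb (length ach - S (length hch)) 1
      then (* advance reduced to one block: release the whole fork, attacker wins *)
        mkState bs [] (hd t ach) (S c) Idle
      else mkState bs (st_secret st) t c (Fork ach (h :: hch))
  end.

Definition genesis : block := mkBlock 0 None false 0 [].

Definition init_state : state := mkState [genesis] [] 0 1 Idle.

Definition run (n1 : nat) (u : list letter) : state :=
  fold_left (step n1) u init_state.

(** [u] consists of exactly [k] complete attack cycles. *)
Definition complete_cycles (n1 : nat) (u : list letter) (k : nat) : bool :=
  let fin := run n1 u in
  match st_phase fin with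
  | Idle => Nat.eqb (st_cycle fin) (S k)
  | _ => false
  end.

Definition official (fin : state) (i : nat) : bool :=
  memb i (ancestors (st_blocks fin) (st_tip fin)).

Definition is_uncle (fin : state) (i : nat) : bool :=
  negb (official fin i) &&
  match parent (st_blocks fin) i with Some x => official fin x | None => false end.

Definition V (n1 : nat) (u : list letter) : nat :=
  let fin := run n1 u in
  let bs := st_blocks fin in
  let ids := seq 0 (length bs) in
  length (filter (fun i =>
    is_uncle fin i && Nat.eqb (cycle_of bs i) 1 &&
    existsb (fun j => official fin j && Nat.leb 2 (cycle_of bs j)
                      && memb i (refs bs j)) ids) ids).

Fixpoint words (N : nat) : list (list letter) :=
  match N with
  | O => [[]]
  | S n => flat_map (fun w => [LA :: w; LHg :: w; LHn :: w]) (words n)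
  end.

Definition lprob (p q gamma : R) (l : letter) : R :=
  match l with
  | LA => q
  | LHg => (p * gamma)%R
  | LHn => (p * (1 - gamma))%R
  end.

Definition wprob (p q gamma : R) (u : list letter) : R :=
  fold_right Rmult 1%R (map (lprob p q gamma) u).

(** Contribution to E[V] of the histories of exactly [m+1] complete attack
    cycles (the first cycle and [m] later ones) consisting of [N] blocks. *)
Definition EV_term (n1 : nat) (p q gamma : R) (m N : nat) : R :=
  fold_right Rplus 0%R
    (map (fun u => if complete_cycles n1 u (S m)
                   then (wprob p q gamma u * INR (V n1 u))%R else 0%R)
         (words N)).

(* Main.v *)
Require Import Defs.
From Stdlib Require Import Reals.
From Stdlib Require Import Lra Lia List Arith Bool Classical.
Import ListNotations.
Open Scope R_scope.

Open Scope R_scope.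

Definition sumw (n : nat) (F : list letter -> R) : R :=
  fold_right Rplus 0 (map F (words n)).

Lemma sumw_S n F :
  sumw (S n) F = sumw n (fun w => F (LA :: w) + F (LHg :: w) + F (LHn :: w)).
Proof.
  unfold sumw. simpl. induction (words n) as [|w ws IH]; simpl; [lra|].
  rewrite IH. lra.
Qed.

Lemma sumw_0 F : sumw 0 F = F [].
Proof. unfold sumw. simpl. lra. Qed.

Lemma words_length n u : In u (words n) -> length u = n.
Proof.
  revert u; induction n as [|n IH]; simpl; intros u Hu.
  - destruct Hu as [<-|[]]; reflexivity.
  - apply in_flat_map in Hu. destruct Hu as [w [Hw Hu]].
    simpl in Hu. destruct Hu as [<-|[<-|[<-|[]]]]; simpl; rewrite (IH w Hw); reflexivity.
Qed.

Lemma sumw_ext_in n F G :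
  (forall u, length u = n -> F u = G u) -> sumw n F = sumw n G.
Proof.
  intros H. unfold sumw.
  assert (HH : forall l, (forall u, In u l -> length u = n) ->
     fold_right Rplus 0 (map F l) = fold_right Rplus 0 (map G l)).
  { induction l as [|a l IH]; simpl; intros Hl; [reflexivity|].
    rewrite H by (apply Hl; auto). rewrite IH by (intros; apply Hl; auto). reflexivity. }
  apply HH. apply words_length.
Qed.

Lemma sumw_ext n F G : (forall u, F u = G u) -> sumw n F = sumw n G.
Proof. intros H; apply sumw_ext_in; intros; apply H. Qed.

Lemma sumw_plus n F G : sumw n (fun u => F u + G u) = sumw n F + sumw n G.
Proof.
  unfold sumw. induction (words n) as [|a l IH]; simpl; [lra|]. rewrite IH; lra.
Qed.

Lemma sumw_scal n c F : sumw n (fun u => c * F u) = c * sumw n F.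
Proof.
  unfold sumw. induction (words n) as [|a l IH]; simpl; [lra|]. rewrite IH; lra.
Qed.

Lemma sumw_le_in n F G :
  (forall u, length u = n -> F u <= G u) -> sumw n F <= sumw n G.
Proof.
  intros H. unfold sumw.
  assert (HH : forall l, (forall u, In u l -> length u = n) ->
     fold_right Rplus 0 (map F l) <= fold_right Rplus 0 (map G l)).
  { induction l as [|a l IH]; simpl; intros Hl; [lra|].
    assert (F a <= G a) by (apply H; apply Hl; auto).
    assert (fold_right Rplus 0 (map F l) <= fold_right Rplus 0 (map G l))
      by (apply IH; intros; apply Hl; auto). lra. }
  apply HH. apply words_length.
Qed.

Lemma sumw_app a b F :
  sumw (a + b) F = sumw a (fun v => sumw b (fun w => F (v ++ w))).
Proof.
  revert F; induction a as [|a IH]; intros F.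
  - rewrite sumw_0. simpl. reflexivity.
  - change (S a + b)%nat with (S (a + b)). rewrite sumw_S. rewrite IH.
    rewrite sumw_S. apply sumw_ext. intros v. simpl.
    rewrite <- !sumw_plus. reflexivity.
Qed.

Fixpoint nA (u : list letter) : nat :=
  match u with [] => O | LA :: w => S (nA w) | _ :: w => nA w end.
Fixpoint nH (u : list letter) : nat :=
  match u with [] => O | LA :: w => nH w | _ :: w => S (nH w) end.

Lemma nA_nH u : (nA u + nH u)%nat = length u.
Proof. induction u as [|[] u IH]; simpl; lia. Qed.

Lemma wprob_cons p q g l u : wprob p q g (l :: u) = lprob p q g l * wprob p q g u.
Proof. reflexivity. Qed.

Lemma wprob_app p q g v w : wprob p q g (v ++ w) = wprob p q g v * wprob p q g w.
Proof.
  induction v as [|l v IH]; simpl; [unfold wprob; simpl; lra|].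
  rewrite !wprob_cons in *. rewrite IH. lra.
Qed.

Lemma wprob_nonneg p q g u : 0 <= p -> 0 <= q -> 0 <= g <= 1 -> 0 <= wprob p q g u.
Proof.
  intros Hp Hq Hg. induction u as [|l u IH]; [unfold wprob; simpl; lra|].
  rewrite wprob_cons. apply Rmult_le_pos; auto.
  destruct l; simpl; nra.
Qed.

Lemma sumw_mgf p q g s n :
  sumw n (fun u => wprob p q g u * s ^ nA u) = (q * s + p) ^ n.
Proof.
  induction n as [|n IH].
  - rewrite sumw_0. unfold wprob. simpl. lra.
  - rewrite sumw_S. simpl.
    rewrite (sumw_ext n _ (fun w => (q * s + p) * (wprob p q g w * s ^ nA w))).
    + rewrite sumw_scal, IH. reflexivity.
    + intros w. rewrite !wprob_cons. simpl. ring.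
Qed.

Lemma sumw_prob p q g n : p + q = 1 -> sumw n (wprob p q g) = 1.
Proof.
  intros Hpq. rewrite (sumw_ext n _ (fun u => wprob p q g u * 1 ^ nA u)).
  - rewrite sumw_mgf. replace (q * 1 + p) with 1 by lra. apply pow1.
  - intros u. rewrite pow1. ring.
Qed.

Definition isH (l : letter) : bool := match l with LA => false | _ => true end.

Fixpoint startsH (b : nat) (u : list letter) : bool :=
  match b with
  | O => true
  | S b' => match u with l :: w => isH l && startsH b' w | [] => false end
  end.

Fixpoint startsAH (a b : nat) (u : list letter) : bool :=
  match a with
  | O => startsH b u
  | S a' => match u with LA :: w => startsAH a' b w | _ => false end
  end.

Lemma sumw_startsAH p q g a b M : p + q = 1 -> (a + b <= M)%nat ->
  sumw M (fun u => wprob p q g u * (if startsAH a b u then 1 else 0)) = q ^ a * p ^ b.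
Proof.
  intros Hpq. revert a b. induction M as [|M IH]; intros a b Hab.
  - assert (a = O) by lia; assert (b = O) by lia; subst. rewrite sumw_0.
    simpl. unfold wprob; simpl; lra.
  - rewrite sumw_S. destruct a as [|a].
    + destruct b as [|b].
      * simpl. rewrite (sumw_ext M _ (fun w => wprob p q g w)).
        { rewrite sumw_prob by auto. ring. }
        intros w. rewrite !wprob_cons. simpl. replace q with (1 - p) by lra. ring.
      * rewrite (sumw_ext M _ (fun w => (p * g + p * (1 - g)) *
           (wprob p q g w * (if startsAH 0 b w then 1 else 0)))).
        { rewrite sumw_scal, IH by lia. simpl. ring. }
        intros w. rewrite !wprob_cons. simpl. ring.
    + rewrite (sumw_ext M _ (fun w => q *
           (wprob p q g w * (if startsAH a b w then 1 else 0)))).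
      { rewrite sumw_scal, IH by lia. simpl. ring. }
      intros w. rewrite !wprob_cons. simpl. ring.
Qed.

Inductive aph := AI | AO | AT | AF (a h : nat).

Definition astep (s : aph * nat) (l : letter) : aph * nat :=
  let (ph, c) := s in
  match ph, l with
  | AI, LA => (AO, c)
  | AI, _ => (AI, S c)
  | AO, LA => (AF 2 0, c)
  | AO, _ => (AT, c)
  | AT, _ => (AI, S c)
  | AF a h, LA => (AF (S a) h, c)
  | AF a h, _ => if Nat.eqb (a - S h) 1 then (AI, S c) else (AF a (S h), c)
  end.

Definition afold (s : aph * nat) (w : list letter) := fold_left astep w s.
Definition arun (w : list letter) := afold (AI, 1%nat) w.
Definition cnt (w : list letter) := snd (arun w).

Definition absS (s : state) : aph * nat :=
  (match st_phase s with
   | Idle => AI | One _ => AO | Tie _ _ => AT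
   | Fork ach hch => AF (length ach) (length hch) end, st_cycle s).

Lemma abs_step n1 s l : absS (step n1 s l) = astep (absS s) l.
Proof.
  destruct s as [bs sec t c ph]. unfold step, absS; simpl.
  destruct ph as [|a|a h|ach hch]; destruct l; simpl; try reflexivity;
  destruct (Nat.eqb (length ach - S (length hch)) 1); reflexivity.
Qed.

Lemma abs_fold n1 w s : absS (fold_left (step n1) w s) = afold (absS s) w.
Proof.
  revert s; induction w as [|l w IH]; intros s; simpl; [reflexivity|].
  rewrite IH, abs_step. reflexivity.
Qed.

Lemma abs_run n1 w : absS (run n1 w) = arun w.
Proof. unfold run, arun. rewrite abs_fold. reflexivity. Qed.

Definition acc (w : list letter) (k : nat) : bool :=
  match arun w with (AI, c) => Nat.eqb c (S k) | _ => false end.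

Lemma cc_acc n1 u k : complete_cycles n1 u k = acc u k.
Proof.
  unfold complete_cycles, acc. rewrite <- (abs_run n1 u).
  unfold absS. destruct (st_phase (run n1 u)); reflexivity.
Qed.

Lemma afold_app s w1 w2 : afold s (w1 ++ w2) = afold (afold s w1) w2.
Proof. unfold afold. apply fold_left_app. Qed.

Lemma arun_app w1 w2 : arun (w1 ++ w2) = afold (arun w1) w2.
Proof. unfold arun. apply afold_app. Qed.

Lemma arun_snoc w l : arun (w ++ [l]) = astep (arun w) l.
Proof. rewrite arun_app. reflexivity. Qed.

Lemma astep_cnt s l :
  (snd (astep s l) = snd s /\ fst (astep s l) <> AI) \/
  (snd (astep s l) = S (snd s) /\ fst (astep s l) = AI).
Proof.
  destruct s as [[| | |a h] c]; destruct l; simpl; try (left; split; [reflexivity|discriminate]);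
  try (right; split; reflexivity).
  all: destruct (Nat.eqb (a - S h) 1); simpl; [right; split; reflexivity|left; split; [reflexivity|discriminate]].
Qed.

Lemma afold_cnt_mono s w : (snd s <= snd (afold s w))%nat.
Proof.
  revert s; induction w as [|l w IH]; intros s; simpl; [lia|].
  specialize (IH (astep s l)). unfold afold in *. simpl.
  destruct (astep_cnt s l) as [[H _]|[H _]]; lia.
Qed.

Lemma cnt_mono w w' : (cnt w <= cnt (w ++ w'))%nat.
Proof. unfold cnt. rewrite arun_app. apply afold_cnt_mono. Qed.

Lemma cnt_ge1 w : (1 <= cnt w)%nat.
Proof. unfold cnt, arun. apply (afold_cnt_mono (AI, 1%nat) w). Qed.

Lemma cnt_snoc w l : cnt (w ++ [l]) = cnt w \/ (cnt (w ++ [l]) = S (cnt w) /\ fst (arun (w ++ [l])) = AI).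
Proof.
  unfold cnt. rewrite arun_snoc. destruct (astep_cnt (arun w) l) as [[H _]|[H1 H2]]; auto.
Qed.

Lemma firstn_prefix {A} (u : list A) k k' : (k <= k')%nat ->
  exists w, firstn k' u = firstn k u ++ w.
Proof.
  intros Hk. exists (skipn k (firstn k' u)).
  rewrite <- (firstn_skipn k (firstn k' u)) at 1.
  rewrite firstn_firstn. replace (Nat.min k k') with k by lia. reflexivity.
Qed.

Lemma cnt_firstn_mono u k k' : (k <= k')%nat -> (cnt (firstn k u) <= cnt (firstn k' u))%nat.
Proof. intros H. destruct (firstn_prefix u k k' H) as [w ->]. apply cnt_mono. Qed.

(* Potential argument *)
Definition psi (ph : aph) : nat :=
  match ph with AI => 0 | AO => 1 | AT => 0 | AF a h => a - h end.

Lemma potential w :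
  (nH w + psi (fst (arun w)) + 1 <= nA w + cnt w)%nat /\
  (forall a h, fst (arun w) = AF a h -> (h + 2 <= a)%nat).
Proof.
  induction w as [|l w IH] using rev_ind.
  - unfold cnt, arun, afold; simpl. split; [lia|]. intros a h H; discriminate.
  - unfold cnt in *. rewrite arun_snoc.
    assert (EA : nA (w ++ [l]) = (nA w + (if isH l then 0 else 1))%nat).
    { clear IH. induction w as [|[] w IHw]; destruct l; simpl in *; lia. }
    assert (EH : nH (w ++ [l]) = (nH w + (if isH l then 1 else 0))%nat).
    { clear IH. induction w as [|[] w IHw]; destruct l; simpl in *; lia. }
    rewrite EA, EH. destruct IH as [IH1 IH2].
    destruct (arun w) as [ph c] eqn:E. simpl in *.
    destruct ph as [| | |a h]; destruct l; cbn [astep psi fst snd isH] in *;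
    try (specialize (IH2 _ _ eq_refl));
    try (destruct (Nat.eqb (a - S h) 1) eqn:Eq; cbn [psi fst snd] in *;
         [apply Nat.eqb_eq in Eq|apply Nat.eqb_neq in Eq]);
    (split; [lia|]); intros ? ? HH; inversion HH; subst; lia.
Qed.

Lemma not_reached_bound u m : (1 <= m)%nat ->
  (forall N, (N <= length u)%nat -> acc (firstn N u) m = false) ->
  (S (length u) <= 2 * nA u + m)%nat.
Proof.
  intros Hm H.
  assert (Hc : (cnt u <= m)%nat).
  { clear - H Hm. induction u as [|l u IH] using rev_ind.
    - unfold cnt; simpl; lia.
    - assert (IH' : (cnt u <= m)%nat).
      { apply IH. intros N HN. specialize (H N).
        rewrite firstn_app in H. replace (N - length u)%nat with O in H by lia.
        simpl in H. rewrite app_nil_r in H. apply H. rewrite length_app; lia. }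
      destruct (cnt_snoc u l) as [E|[E1 E2]]; [lia|].
      specialize (H (length (u ++ [l])) (le_n _)). rewrite firstn_all in H.
      unfold acc in H. unfold cnt in *. destruct (arun (u ++ [l])) as [ph c]. simpl in *.
      subst ph. destruct (Nat.eqb c (S m)) eqn:Ec; [discriminate|].
      apply Nat.eqb_neq in Ec. lia. }
  destruct (potential u) as [P _]. pose proof (nA_nH u). lia.
Qed.

Lemma acc_cnt w k : acc w k = true -> fst (arun w) = AI /\ cnt w = S k.
Proof.
  unfold acc, cnt. destruct (arun w) as [[| | |] c]; try discriminate.
  intros H; apply Nat.eqb_eq in H; simpl; auto.
Qed.

Lemma idle_after u w k :
  fst (arun u) = AI -> cnt u = k -> w <> [] -> fst (arun (u ++ w)) = AI -> (S k <= cnt (u ++ w))%nat.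
Proof.
  intros H1 H2 Hw H3. destruct (exists_last Hw) as [w' [l ->]].
  rewrite app_assoc in *. unfold cnt in *. rewrite arun_snoc in *.
  pose proof (cnt_mono u w'). unfold cnt in H.
  destruct (astep_cnt (arun (u ++ w')) l) as [[A B]|[A B]]; [congruence|]. lia.
Qed.

Lemma acc_unique u k N1 N2 :
  (N1 <= length u)%nat -> (N2 <= length u)%nat ->
  acc (firstn N1 u) k = true -> acc (firstn N2 u) k = true -> N1 = N2.
Proof.
  revert N1 N2.
  assert (L : forall N1 N2, (N1 <= length u)%nat -> (N2 <= length u)%nat ->
     acc (firstn N1 u) k = true -> acc (firstn N2 u) k = true -> (N1 < N2)%nat -> False).
  { intros N1 N2 H1 H2 A1 A2 Hlt.
    destruct (firstn_prefix u N1 N2) as [w Hw]; [lia|].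
    apply acc_cnt in A1, A2. rewrite Hw in A2.
    assert (w <> []).
    { intros ->. rewrite app_nil_r in Hw.
      assert (length (firstn N2 u) = length (firstn N1 u)) by (rewrite Hw; reflexivity).
      rewrite !length_firstn in H. lia. }
    pose proof (idle_after (firstn N1 u) w (S k) (proj1 A1) (proj2 A1) H (proj1 A2)). lia. }
  intros N1 N2 H1 H2 A1 A2. destruct (Nat.lt_trichotomy N1 N2) as [H|[H|H]]; auto.
  - exfalso; exact (L N1 N2 H1 H2 A1 A2 H).
  - exfalso; exact (L N2 N1 H2 H1 A2 A1 H).
Qed.

Definition normH (l : letter) : letter := match l with LA => LA | _ => LHg end.

Lemma astep_norm s l : astep s l = astep s (normH l).
Proof. destruct s as [[| | |a h] c]; destruct l; reflexivity. Qed.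

Lemma afold_norm s w : afold s w = afold s (map normH w).
Proof.
  revert s; induction w as [|l w IH]; intros s; [reflexivity|].
  simpl. unfold afold in *. simpl. rewrite <- astep_norm. apply IH.
Qed.

Lemma startsH_norm b u : startsH b u = true -> map normH (firstn b u) = repeat LHg b.
Proof.
  revert u; induction b as [|b IH]; intros u H; [reflexivity|].
  destruct u as [|l u]; [discriminate|]. simpl in H. apply andb_true_iff in H as [H1 H2].
  simpl. rewrite IH by auto. destruct l; [discriminate|reflexivity|reflexivity].
Qed.

Lemma startsAH_norm a b u : startsAH a b u = true ->
  map normH (firstn (a + b) u) = repeat LA a ++ repeat LHg b.
Proof.
  revert u; induction a as [|a IH]; intros u H.
  - simpl. apply startsH_norm; auto.
  - destruct u as [|[] u]; try discriminate. simpl. rewrite IH by auto. reflexivity.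
Qed.

Lemma afold_AF_LA a h c k : afold (AF a h, c) (repeat LA k) = (AF (a + k) h, c).
Proof.
  revert a; induction k as [|k IH]; intros a; simpl; [rewrite Nat.add_0_r; reflexivity|].
  unfold afold in *; simpl. rewrite IH. f_equal. f_equal. lia.
Qed.

Lemma arun_LA L : (2 <= L)%nat -> arun (repeat LA L) = (AF L 0, 1%nat).
Proof.
  intros HL. replace L with (2 + (L - 2))%nat by lia.
  rewrite repeat_app. unfold arun. rewrite afold_app. simpl.
  change (afold (AF 2 0, 1%nat) (repeat LA (L - 2))) with (afold (AF 2 0, 1%nat) (repeat LA (L - 2))).
  rewrite afold_AF_LA. reflexivity.
Qed.

Lemma afold_AF_H L h c k : (h + k <= L - 2)%nat ->
  afold (AF L h, c) (repeat LHg k) = (AF L (h + k), c).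
Proof.
  revert h; induction k as [|k IH]; intros h Hk; simpl; [rewrite Nat.add_0_r; reflexivity|].
  unfold afold in *; simpl.
  destruct (Nat.eqb (L - S h) 1) eqn:E; [apply Nat.eqb_eq in E; lia|].
  rewrite IH by lia. f_equal. f_equal. lia.
Qed.

Lemma arun_pattern L : (2 <= L)%nat ->
  arun (repeat LA L ++ repeat LHg (L - 1)) = (AI, 2%nat) /\
  cnt (repeat LA L ++ repeat LHg (L - 2)) = 1%nat.
Proof.
  intros HL. split.
  - replace (L - 1)%nat with ((L - 2) + 1)%nat by lia. rewrite repeat_app.
    rewrite app_assoc, arun_app, arun_app, arun_LA by auto.
    rewrite afold_AF_H by lia. simpl. unfold afold; simpl.
    match goal with |- context [Nat.eqb ?x 1] => destruct (Nat.eqb x 1) eqn:E end;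
    [reflexivity|apply Nat.eqb_neq in E; lia].
  - unfold cnt. rewrite arun_app, arun_LA, afold_AF_H by lia. reflexivity.
Qed.

Lemma startsAH_weak a b u : startsAH a (S b) u = true -> startsAH a b u = true.
Proof.
  revert u; induction a as [|a IH]; intros u H.
  - revert u H; induction b as [|b IHb]; intros u H; [reflexivity|].
    destruct u as [|l u]; [discriminate|]. simpl in *.
    apply andb_true_iff in H as [H1 H2]. rewrite H1. simpl. apply IHb. auto.
  - destruct u as [|[] u]; try discriminate. simpl in *. apply IH; auto.
Qed.

Lemma sAH_cnt L u : (2 <= L)%nat -> startsAH L (L - 1) u = true ->
  arun (firstn (2 * L - 1) u) = (AI, 2%nat) /\ cnt (firstn (2 * L - 2) u) = 1%nat.
Proof.
  intros HL H. split.
  - unfold arun. rewrite afold_norm. replace (2 * L - 1)%nat with (L + (L - 1))%nat by lia.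
    rewrite startsAH_norm by auto. apply arun_pattern; auto.
  - assert (H' : startsAH L (L - 2) u = true).
    { apply startsAH_weak. replace (S (L - 2)) with (L - 1)%nat by lia. auto. }
    unfold cnt, arun. rewrite afold_norm. replace (2 * L - 2)%nat with (L + (L - 2))%nat by lia.
    rewrite startsAH_norm by auto. apply arun_pattern; auto.
Qed.

Lemma startsAH_app a b w r : startsAH a b w = true -> startsAH a b (w ++ r) = true.
Proof.
  revert w; induction a as [|a IH]; intros w H.
  - simpl in *. revert w H; induction b as [|b IHb]; intros w H; [reflexivity|].
    destruct w as [|l w]; [discriminate|]. simpl in *.
    apply andb_true_iff in H as [H1 H2]. rewrite H1. simpl. apply IHb. auto.
  - destruct w as [|[] w]; try discriminate. simpl in *. apply IH; auto.
Qed.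

Lemma startsAH_firstn a b u N : startsAH a b u = true -> (a + b <= N)%nat ->
  startsAH a b (firstn N u) = true.
Proof.
  revert u N; induction a as [|a IH]; intros u N H HN.
  - simpl in *. revert u N H HN; induction b as [|b IHb]; intros u N H HN; [reflexivity|].
    destruct u as [|l u]; [discriminate|]. destruct N as [|N]; [lia|]. simpl in *.
    apply andb_true_iff in H as [H1 H2]. rewrite H1. simpl. apply IHb; auto. lia.
  - destruct u as [|[] u]; try discriminate. destruct N as [|N]; [lia|]. simpl in *.
    apply IH; auto. lia.
Qed.

Lemma startsAH_disj a1 b1 a2 b2 u :
  startsAH a1 (S b1) u = true -> startsAH a2 b2 u = true -> (a1 < a2)%nat -> False.
Proof.
  revert a2 u; induction a1 as [|a1 IH]; intros a2 u H1 H2 Hlt.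
  - destruct a2 as [|a2]; [lia|]. destruct u as [|[] u]; simpl in *; discriminate.
  - destruct a2 as [|a2]; [lia|]. destruct u as [|[] u]; try discriminate. simpl in *.
    apply (IH a2 u); auto. lia.
Qed.

Lemma startsAH_uniq L1 L2 u : (2 <= L1)%nat -> (2 <= L2)%nat ->
  startsAH L1 (pred L1) u = true -> startsAH L2 (pred L2) u = true -> L1 = L2.
Proof.
  intros H1 H2 S1 S2. destruct (Nat.lt_trichotomy L1 L2) as [H|[H|H]]; auto; exfalso.
  - replace (pred L1) with (S (L1 - 2)) in S1 by lia. exact (startsAH_disj _ _ _ _ _ S1 S2 H).
  - replace (pred L2) with (S (L2 - 2)) in S2 by lia. exact (startsAH_disj _ _ _ _ _ S2 S1 H).
Qed.

Fixpoint pureb (w : list letter) : bool :=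
  match w with
  | [] => true
  | LA :: w' => pureb w'
  | _ :: w' => Nat.eqb (nA w') 0
  end.

Lemma nA_app u v : nA (u ++ v) = (nA u + nA v)%nat.
Proof. induction u as [|[] u IH]; simpl; lia. Qed.
Lemma nH_app u v : nH (u ++ v) = (nH u + nH v)%nat.
Proof. induction u as [|[] u IH]; simpl; lia. Qed.

Lemma pureb_snoc_A c : pureb (c ++ [LA]) = pureb c && Nat.eqb (nH c) 0.
Proof.
  induction c as [|[] c IH]; simpl; auto.
  - rewrite nA_app. simpl. destruct (nA c); reflexivity.
  - rewrite nA_app. simpl. destruct (nA c); reflexivity.
Qed.

Lemma pureb_snoc_H c l : isH l = true -> pureb (c ++ [l]) = pureb c.
Proof.
  intros Hl. induction c as [|[] c IH]; simpl; auto.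
  - destruct l; [discriminate|reflexivity|reflexivity].
  - rewrite nA_app. destruct l; [discriminate| |]; simpl; rewrite Nat.add_0_r; reflexivity.
  - rewrite nA_app. destruct l; [discriminate| |]; simpl; rewrite Nat.add_0_r; reflexivity.
Qed.

Lemma allH_starts w r : nA w = O -> startsH (nH w) (w ++ r) = true.
Proof.
  induction w as [|[] w IH]; simpl; intros H; auto; discriminate.
Qed.

Lemma pure_starts w r : pureb w = true -> startsAH (nA w) (nH w) (w ++ r) = true.
Proof.
  induction w as [|l w IH]; intros H.
  - reflexivity.
  - destruct l; simpl in *.
    + apply IH; auto.
    + apply Nat.eqb_eq in H. rewrite H. simpl. apply allH_starts; auto.
    + apply Nat.eqb_eq in H. rewrite H. simpl. apply allH_starts; auto.
Qed.

Lemma starts_pure a b u : startsAH a b u = true -> pureb (firstn (a + b) u) = true.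
Proof.
  revert u; induction a as [|a IH]; intros u H.
  - simpl in *. destruct b as [|b]; [reflexivity|].
    destruct u as [|l u]; [discriminate|]. simpl in *.
    apply andb_true_iff in H as [H1 H2]. destruct l; [discriminate| |];
    apply Nat.eqb_eq; clear H1; revert u H2; induction b as [|b IHb]; intros u H2; auto;
    destruct u as [|l u]; try discriminate; simpl in *;
    apply andb_true_iff in H2 as [H3 H4]; destruct l; try discriminate; simpl; auto.
  - destruct u as [|[] u]; try discriminate. simpl. apply IH; auto.
Qed.

Lemma count_le1 {A} (f : A -> bool) l :
  NoDup l -> (forall x y, In x l -> In y l -> f x = true -> f y = true -> x = y) ->
  (length (filter f l) <= 1)%nat.
Proof.
  induction l as [|a l IH]; intros Hnd H; simpl; [lia|].
  inversion Hnd; subst.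
  destruct (f a) eqn:Fa; simpl.
  - assert (filter f l = []).
    { destruct (filter f l) as [|y l'] eqn:E; auto.
      assert (Hy : In y (filter f l)) by (rewrite E; left; auto).
      apply filter_In in Hy as [Hy1 Hy2].
      assert (a = y) by (apply H; simpl; auto). subst. contradiction. }
    rewrite H0. simpl. lia.
  - apply IH; auto. intros; apply H; simpl; auto.
Qed.

Lemma count_zero {A} (f : A -> bool) l :
  (forall x, In x l -> f x = false) -> length (filter f l) = O.
Proof.
  induction l as [|a l IH]; intros H; simpl; auto.
  rewrite H by (left; auto). apply IH; intros; apply H; simpl; auto.
Qed.

Lemma count_one {A} (f : A -> bool) l x0 :
  NoDup l -> In x0 l -> f x0 = true ->
  (forall x, In x l -> f x = true -> x = x0) -> length (filter f l) = 1%nat.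
Proof.
  intros Hnd Hin Hf H.
  assert (Hle : (length (filter f l) <= 1)%nat).
  { apply count_le1; auto. intros x y Hx Hy Fx Fy. rewrite (H x), (H y); auto. }
  assert (In x0 (filter f l)) by (apply filter_In; auto).
  destruct (filter f l); simpl in *; [contradiction|lia].
Qed.

Definition gcount (n1 : nat) (u : list letter) : nat :=
  length (filter (fun L => startsAH L (pred L) u) (seq 2 (n1 - 1))).

Lemma gcount_le1 n1 u : (gcount n1 u <= 1)%nat.
Proof.
  apply count_le1; [apply seq_NoDup|].
  intros x y Hx Hy Fx Fy. apply in_seq in Hx, Hy. eapply startsAH_uniq; eauto; lia.
Qed.

Lemma gcount_one n1 u L0 : (2 <= L0)%nat -> startsAH L0 (pred L0) u = true ->
  gcount n1 u = if Nat.leb L0 n1 then 1%nat else 0%nat.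
Proof.
  intros HL H. unfold gcount. destruct (Nat.leb L0 n1) eqn:E.
  - apply Nat.leb_le in E. apply count_one with L0; auto.
    + apply seq_NoDup.
    + apply in_seq. lia.
    + intros x Hx Fx. apply in_seq in Hx. eapply startsAH_uniq; eauto; lia.
  - apply Nat.leb_gt in E. apply count_zero. intros x Hx.
    apply in_seq in Hx. destruct (startsAH x (pred x) u) eqn:F; auto.
    assert (x = L0) by (eapply startsAH_uniq; eauto; lia). lia.
Qed.

Lemma gcount_zero n1 u : (forall L, (2 <= L)%nat -> startsAH L (pred L) u = false) ->
  gcount n1 u = O.
Proof.
  intros H. unfold gcount. apply count_zero. intros x Hx. apply in_seq in Hx. apply H. lia.
Qed.

Lemma gcount_firstn n1 u N : (N <= length u)%nat -> (2 <= cnt (firstn N u))%nat ->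
  gcount n1 (firstn N u) = gcount n1 u.
Proof.
  intros HN Hc. unfold gcount. f_equal. apply filter_ext_in. intros L HL. apply in_seq in HL.
  destruct (startsAH L (pred L) u) eqn:E.
  - destruct (le_lt_dec (2 * L - 1) N) as [Hle|Hlt].
    + apply startsAH_firstn; auto. lia.
    + exfalso. replace (pred L) with (L - 1)%nat in E by lia.
      destruct (sAH_cnt L u) as [_ C]; auto; [lia|].
      pose proof (cnt_firstn_mono u N (2 * L - 2)). lia.
  - destruct (startsAH L (pred L) (firstn N u)) eqn:E2; auto.
    rewrite <- (firstn_skipn N u) in E. rewrite startsAH_app in E by auto. discriminate.
Qed.

Open Scope nat_scope.

Inductive AncR (bs : list block) (x : nat) : nat -> Prop :=
| AncR_refl : AncR bs x x
| AncR_step : forall i p, parent bs i = Some p -> AncR bs x p -> AncR bs x i.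

Definition att (bs : list block) (i : nat) : bool :=
  match get bs i with Some b => b_attacker b | None => false end.

Definition RefOK n1 bs j u : Prop := exists pj, parent bs j = Some pj /\ u < j /\
   (exists x, parent bs u = Some x /\ AncR bs x pj) /\ ~ AncR bs u pj /\
   height bs j - height bs u <= n1 /\ (forall a, AncR bs a pj -> ~ In u (refs bs a)).

Definition WFB n1 bs : Prop :=
  1 <= length bs /\ parent bs 0 = None /\ cycle_of bs 0 = 0 /\ height bs 0 = 0 /\
  (forall i, 0 < i < length bs -> exists p, parent bs i = Some p /\ p < i /\
       height bs i = S (height bs p)) /\
  (forall j u, In u (refs bs j) -> RefOK n1 bs j u).

Lemma memb_In x l : memb x l = true <-> In x l.
Proof.
  unfold memb. rewrite existsb_exists. split.
  - intros [y [Hy E]]. apply Nat.eqb_eq in E. subst; auto.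
  - intros H. exists x. split; auto. apply Nat.eqb_refl.
Qed.

Lemma memb_false x l : memb x l = false <-> ~ In x l.
Proof.
  rewrite <- memb_In. destruct (memb x l); split; intros; auto; try discriminate. congruence.
Qed.

Lemma get_lt bs i b : get bs i = Some b -> i < length bs.
Proof. unfold get. intros H. apply nth_error_Some. congruence. Qed.

Lemma parent_some bs i p : parent bs i = Some p -> i < length bs.
Proof. unfold parent. destruct (get bs i) eqn:E; [|discriminate]. intros _. eapply get_lt; eauto. Qed.

Lemma parent_lt n1 bs i p : WFB n1 bs -> parent bs i = Some p -> p < i /\ height bs i = S (height bs p).
Proof.
  intros (H1 & H2 & H3 & H4 & H5 & H6) Hp.
  pose proof (parent_some _ _ _ Hp).
  destruct i as [|i]; [congruence|].
  destruct (H5 (S i)) as [p' [E [Lt Hh]]]; [lia|]. rewrite Hp in E. inversion E; subst. auto.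
Qed.

Lemma AncR_le n1 bs a i : WFB n1 bs -> AncR bs a i -> a <= i.
Proof.
  intros W H. induction H; [lia|]. destruct (parent_lt _ _ _ _ W H). lia.
Qed.

Lemma AncR_height n1 bs a i : WFB n1 bs -> AncR bs a i -> height bs a <= height bs i.
Proof.
  intros W H. induction H; [lia|]. destruct (parent_lt _ _ _ _ W H). lia.
Qed.

Lemma AncR_trans bs a b c : AncR bs a b -> AncR bs b c -> AncR bs a c.
Proof. intros H1 H2. induction H2; auto. eapply AncR_step; eauto. Qed.

Lemma AncR_0 n1 bs i : WFB n1 bs -> i < length bs -> AncR bs 0 i.
Proof.
  intros W. induction i as [i IH] using lt_wf_ind. intros Hi.
  destruct i as [|i]; [constructor|].
  pose proof W as (H1 & H2 & H3 & H4 & H5 & H6).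
  destruct (H5 (S i)) as [p [E [Lt Hh]]]; [lia|].
  apply (AncR_step bs 0 (S i) p E). apply IH; lia.
Qed.

Lemma AncR_inv bs x i : AncR bs x i -> x = i \/ exists p, parent bs i = Some p /\ AncR bs x p.
Proof. intros H. inversion H; subst; eauto. Qed.

Lemma ancestors_fuel_iff n1 bs f i x : WFB n1 bs -> i <= f -> i < length bs ->
  (In x (ancestors_fuel bs f i) <-> AncR bs x i).
Proof.
  intros W. revert i. induction f as [|f IH]; intros i Hf Hi.
  - assert (i = 0) by lia. subst. simpl. split.
    + intros [<-|[]]. constructor.
    + intros H. apply AncR_inv in H. destruct H as [->|[p [Hp _]]]; auto.
      destruct W as (_ & H2 & _). congruence.
  - simpl. destruct (parent bs i) as [p|] eqn:Hp.
    + destruct (parent_lt _ _ _ _ W Hp) as [Lt _].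
      rewrite (IH p) by lia. split.
      * intros [<-|H]; [constructor|]. eapply AncR_step; eauto.
      * intros H. apply AncR_inv in H. destruct H as [->|[p' [Hp' H]]]; auto.
        right. rewrite Hp in Hp'. inversion Hp'; subst; auto.
    + split.
      * intros [<-|[]]. constructor.
      * intros H. apply AncR_inv in H. destruct H as [->|[p' [Hp' _]]]; [left; auto|congruence].
Qed.

Lemma ancestors_iff n1 bs i x : WFB n1 bs -> i < length bs ->
  (In x (ancestors bs i) <-> AncR bs x i).
Proof. intros W Hi. unfold ancestors. apply ancestors_fuel_iff with n1; auto. lia. Qed.

Lemma memb_anc n1 bs i x : WFB n1 bs -> i < length bs ->
  (memb x (ancestors bs i) = true <-> AncR bs x i).
Proof. intros. rewrite memb_In. apply ancestors_iff with n1; auto. Qed.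

Definition agree (n : nat) (bs bs' : list block) : Prop :=
  forall i, i < n -> get bs i = get bs' i.

Lemma agree_parent n bs bs' i : agree n bs bs' -> i < n -> parent bs i = parent bs' i.
Proof. intros A H. unfold parent. rewrite A; auto. Qed.
Lemma agree_height n bs bs' i : agree n bs bs' -> i < n -> height bs i = height bs' i.
Proof. intros A H. unfold height. rewrite A; auto. Qed.
Lemma agree_refs n bs bs' i : agree n bs bs' -> i < n -> refs bs i = refs bs' i.
Proof. intros A H. unfold refs. rewrite A; auto. Qed.
Lemma agree_cycle n bs bs' i : agree n bs bs' -> i < n -> cycle_of bs i = cycle_of bs' i.
Proof. intros A H. unfold cycle_of. rewrite A; auto. Qed.
Lemma agree_att n bs bs' i : agree n bs bs' -> i < n -> att bs i = att bs' i.
Proof. intros A H. unfold att. rewrite A; auto. Qed.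

Lemma agree_AncR n1 n bs bs' x i : WFB n1 bs -> agree n bs bs' -> i < n ->
  (AncR bs x i <-> AncR bs' x i).
Proof.
  intros W A Hi. split; intros H.
  - induction H; [constructor|].
    destruct (parent_lt _ _ _ _ W H). eapply AncR_step.
    + rewrite <- (agree_parent n bs bs'); eauto.
    + apply IHAncR. lia.
  - induction H; [constructor|].
    rewrite <- (agree_parent n bs bs') in H by auto.
    destruct (parent_lt _ _ _ _ W H). eapply AncR_step; eauto. apply IHAncR. lia.
Qed.

Lemma agree_app bs b : agree (length bs) bs (bs ++ [b]).
Proof. intros i Hi. unfold get. rewrite nth_error_app1; auto. Qed.

Lemma get_app_len bs b : get (bs ++ [b]) (length bs) = Some b.
Proof. unfold get. rewrite nth_error_app2 by lia. rewrite Nat.sub_diag. reflexivity. Qed.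

Lemma agree_trans n bs1 bs2 bs3 : agree n bs1 bs2 -> agree n bs2 bs3 -> agree n bs1 bs3.
Proof. intros A B i Hi. rewrite A, B; auto. Qed.

Lemma agree_mono n n' bs bs' : n' <= n -> agree n bs bs' -> agree n' bs bs'.
Proof. intros H A i Hi. apply A. lia. Qed.

Lemma get_none bs i : length bs <= i -> get bs i = None.
Proof. intros H. unfold get. apply nth_error_None. auto. Qed.

Lemma RefOK_agree n1 n bs bs' j u : WFB n1 bs -> agree n bs bs' -> j < n ->
  RefOK n1 bs j u -> RefOK n1 bs' j u.
Proof.
  intros W A Hj (pj & Hp & Hu & (x & Hx & Ax) & NA & Hh & Hr).
  destruct (parent_lt _ _ _ _ W Hp) as [Lt _].
  exists pj. repeat split; auto.
  - rewrite <- (agree_parent n bs bs'); auto.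
  - exists x. split.
    + rewrite <- (agree_parent n bs bs'); auto. lia.
    + rewrite <- (agree_AncR n1 n bs bs'); auto. lia.
  - rewrite <- (agree_AncR n1 n bs bs'); auto. lia.
  - rewrite <- !(agree_height n bs bs'); auto. lia.
  - intros a Ha. rewrite <- (agree_AncR n1 n bs bs') in Ha by (auto; lia).
    pose proof (AncR_le _ _ _ _ W Ha).
    rewrite <- (agree_refs n bs bs' a A) by lia. auto.
Qed.

Lemma refs_lt n1 bs j u : WFB n1 bs -> In u (refs bs j) -> u < j.
Proof. intros W H. destruct W as (_ & _ & _ & _ & _ & W). destruct (W j u H) as (? & ? & ? & _). auto. Qed.

Lemma refs_0 n1 bs : WFB n1 bs -> refs bs 0 = [].
Proof.
  intros W. destruct (refs bs 0) as [|u l] eqn:E; auto.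
  assert (In u (refs bs 0)) by (rewrite E; left; auto).
  apply (refs_lt n1) in H; auto. lia.
Qed.

Definition uncle_cond n1 bs (sec : list nat) (attacker : bool) par hb u : Prop :=
  u < length bs /\ (attacker = true \/ ~ In u sec) /\
  (exists x, parent bs u = Some x /\ AncR bs x par) /\ ~ AncR bs u par /\
  hb - height bs u <= n1 /\ (forall a, AncR bs a par -> ~ In u (refs bs a)).

Lemma uncle_refs_iff n1 bs sec attacker par hb u : WFB n1 bs -> par < length bs ->
  (In u (uncle_refs n1 bs sec attacker par hb) <-> uncle_cond n1 bs sec attacker par hb u).
Proof.
  intros W Hp. unfold uncle_refs, uncle_cond. rewrite filter_In, in_seq.
  rewrite !andb_true_iff, orb_true_iff, !negb_true_iff, Nat.leb_le, forallb_forall.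
  rewrite memb_false, (memb_false u (ancestors bs par)).
  rewrite (ancestors_iff n1 bs par u W Hp).
  split.
  - intros [[_ Hl] [[[[H1 H2] H3] H4] H5]].
    split; [lia|]. split; [destruct H1; auto|]. split.
    { destruct (parent bs u) as [x|]; [|discriminate]. exists x. split; auto.
      apply memb_anc with n1; auto. }
    split; [auto|]. split; [auto|].
    intros a Ha. apply (ancestors_iff n1 bs par a W Hp) in Ha.
    specialize (H5 a Ha). apply negb_true_iff in H5. apply memb_false in H5. auto.
  - intros (Hl & H1 & (x & Hx & Ax) & H3 & H4 & H5). split; [lia|].
    split; [split; [split; [split; [destruct H1; auto|]|]|]|].
    + rewrite Hx. apply memb_anc with n1; auto.
    + auto.
    + auto.
    + intros a Ha. apply negb_true_iff. apply memb_false. apply H5.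
      apply (ancestors_iff n1 bs par a W Hp). auto.
Qed.

Definition newblock n1 bs sec attacker cyc par : block :=
  mkBlock (S (height bs par)) (Some par) attacker cyc
    (uncle_refs n1 bs sec attacker par (S (height bs par))).

Lemma mine_eq n1 st par attacker :
  mine n1 st par attacker =
  (st_blocks st ++ [newblock n1 (st_blocks st) (st_secret st) attacker (st_cycle st) par],
   length (st_blocks st)).
Proof. reflexivity. Qed.

Lemma new_parent n1 bs sec a c par : parent (bs ++ [newblock n1 bs sec a c par]) (length bs) = Some par.
Proof. unfold parent. rewrite get_app_len. reflexivity. Qed.
Lemma new_height n1 bs sec a c par : height (bs ++ [newblock n1 bs sec a c par]) (length bs) = S (height bs par).
Proof. unfold height. rewrite get_app_len. reflexivity. Qed.
Lemma new_refs n1 bs sec a c par : refs (bs ++ [newblock n1 bs sec a c par]) (length bs) = uncle_refs n1 bs sec a par (S (height bs par)).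
Proof. unfold refs. rewrite get_app_len. reflexivity. Qed.
Lemma new_cycle n1 bs sec a c par : cycle_of (bs ++ [newblock n1 bs sec a c par]) (length bs) = c.
Proof. unfold cycle_of. rewrite get_app_len. reflexivity. Qed.
Lemma new_att n1 bs sec a c par : att (bs ++ [newblock n1 bs sec a c par]) (length bs) = a.
Proof. unfold att. rewrite get_app_len. reflexivity. Qed.

Lemma mine_WFB n1 bs sec a c par : WFB n1 bs -> par < length bs ->
  WFB n1 (bs ++ [newblock n1 bs sec a c par]).
Proof.
  intros W Hp. pose proof (agree_app bs (newblock n1 bs sec a c par)) as A.
  pose proof (new_parent n1 bs sec a c par) as NP.
  pose proof (new_height n1 bs sec a c par) as NH.
  pose proof (new_refs n1 bs sec a c par) as NR.
  set (bs' := bs ++ [newblock n1 bs sec a c par]) in *.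
  assert (Lb : length bs' = S (length bs)) by (unfold bs'; rewrite length_app; simpl; lia).
  pose proof W as (H1 & H2 & H3 & H4 & H5 & H6).
  assert (L0 : 0 < length bs) by lia.
  repeat split.
  - lia.
  - rewrite <- (agree_parent _ _ _ _ A L0); auto.
  - rewrite <- (agree_cycle _ _ _ _ A L0); auto.
  - rewrite <- (agree_height _ _ _ _ A L0); auto.
  - intros i Hi. destruct (Nat.eq_dec i (length bs)) as [->|Hne].
    + exists par. rewrite NP, NH. split; auto. split; auto.
      f_equal. exact (agree_height _ _ _ _ A Hp).
    + destruct (H5 i) as [p [E [Lt Hh]]]; [lia|]. exists p.
      rewrite <- (agree_parent _ _ _ _ A) by lia. rewrite <- !(agree_height _ _ _ _ A) by lia.
      auto.
  - intros j u Hu. destruct (lt_eq_lt_dec j (length bs)) as [[Lt|Eq]|Gt].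
    + rewrite <- (agree_refs _ _ _ _ A Lt) in Hu. apply (RefOK_agree n1 (length bs) bs); auto.
    + subst j. rewrite NR in Hu.
      apply uncle_refs_iff in Hu; auto.
      destruct Hu as (Hl & _ & (x & Hx & Ax) & NA & Hh & Hr).
      exists par. rewrite NP. repeat split; auto.
      * exists x. pose proof (AncR_le _ _ _ _ W Ax).
        split; [rewrite <- (agree_parent _ _ _ _ A Hl); auto|].
        apply (agree_AncR n1 (length bs) bs); auto.
      * rewrite <- (agree_AncR n1 (length bs) bs); auto.
      * rewrite NH, <- (agree_height _ _ _ _ A Hl). auto.
      * intros a' Ha. rewrite <- (agree_AncR n1 (length bs) bs) in Ha; auto.
        pose proof (AncR_le _ _ _ _ W Ha).
        rewrite <- (agree_refs _ _ _ _ A) by lia. auto.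
    + exfalso. unfold refs in Hu. rewrite get_none in Hu by lia. destruct Hu.
Qed.

Definition phase_mem (ph : phase) : list nat :=
  match ph with Idle => [] | One a => [a] | Tie a h => [a; h] | Fork ach hch => ach ++ hch end.

Definition GI n1 (s : state) : Prop :=
  WFB n1 (st_blocks s) /\
  (forall x, In x (st_tip s :: st_secret s ++ phase_mem (st_phase s)) -> x < length (st_blocks s)).

Lemma hd_in (t : nat) l : In (hd t l) (t :: l).
Proof. destruct l; simpl; auto. Qed.

Lemma bound_helper (L L' : list nat) n :
  (forall x, In x L' -> n = x \/ In x L) -> (forall x, In x L -> x < n) ->
  forall x, In x L' -> x < n + 1.
Proof. intros H1 H2 x Hx. destruct (H1 x Hx) as [<-|H]; [lia|]. specialize (H2 x H). lia. Qed.

Lemma GI_step n1 s l : GI n1 s -> GI n1 (step n1 s l).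
Proof.
  destruct s as [bs sec t c ph]. intros [W B]. cbn [st_blocks st_tip st_secret st_phase] in B, W.
  unfold step. cbn [st_phase st_tip st_cycle st_blocks st_secret].
  destruct ph as [|a|a h|[|a0 ach] [|h0 hch]]; destruct l; rewrite ?mine_eq; cbn [st_phase st_tip st_cycle st_blocks st_secret hd].
  all: try match goal with |- context [Nat.eqb ?x 1] => destruct (Nat.eqb x 1) end.
  all: cbn [phase_mem app] in B.
  all: unfold GI; cbn [st_phase st_tip st_cycle st_blocks st_secret]; split;
    [apply mine_WFB; auto; apply B; simpl; rewrite ?in_app_iff; simpl; rewrite ?in_app_iff; simpl; tauto|].
  all: rewrite length_app; simpl length; (eapply bound_helper; [|exact B]); intros y Hy; simpl in *; rewrite ?in_app_iff in *; simpl in *; rewrite ?in_app_iff in *; simpl in *; tauto.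
Qed.

Lemma GI_init n1 : GI n1 init_state.
Proof.
  split.
  - split; [simpl; lia|]. split; [reflexivity|]. split; [reflexivity|]. split; [reflexivity|].
    split.
    + intros i Hi. simpl in Hi. lia.
    + intros j u Hu. unfold refs, get in Hu. destruct j as [|[|j]]; simpl in Hu; destruct Hu.
  - simpl. intros x [<-|[]]. lia.
Qed.

Lemma GI_fold n1 w s : GI n1 s -> GI n1 (fold_left (step n1) w s).
Proof.
  revert s; induction w as [|l w IH]; intros s H; simpl; auto. apply IH. apply GI_step; auto.
Qed.

Lemma GI_run n1 w : GI n1 (run n1 w).
Proof. apply GI_fold. apply GI_init. Qed.

Open Scope nat_scope.

Definition BP n1 n t1 bs1 bs : Prop :=
  n <= length bs /\ agree n bs1 bs /\
  (forall j, n <= j < length bs ->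
     (exists p, parent bs j = Some p /\ (p = t1 \/ n <= p)) /\ 2 <= cycle_of bs j) /\
  (forall j pj u, n <= j < length bs -> parent bs j = Some pj -> u < n ->
     (exists x, parent bs u = Some x /\ AncR bs x pj) -> ~ AncR bs u pj ->
     height bs j - height bs u <= n1 -> (forall a, AncR bs a pj -> ~ In u (refs bs a)) ->
     In u (refs bs j)).

Lemma BP_mine n1 n t1 bs1 bs sec attk cyc par :
  WFB n1 bs -> BP n1 n t1 bs1 bs -> par < length bs -> (par = t1 \/ n <= par) -> 2 <= cyc ->
  (forall x, In x sec -> n <= x) ->
  BP n1 n t1 bs1 (bs ++ [newblock n1 bs sec attk cyc par]).
Proof.
  intros W (Hn & Ag & Hc & Hd) Hp Hpp Hcyc Hsec.
  pose proof (agree_app bs (newblock n1 bs sec attk cyc par)) as A.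
  pose proof (new_parent n1 bs sec attk cyc par) as NP.
  pose proof (new_height n1 bs sec attk cyc par) as NH.
  pose proof (new_refs n1 bs sec attk cyc par) as NR.
  pose proof (new_cycle n1 bs sec attk cyc par) as NC.
  set (bs' := bs ++ [newblock n1 bs sec attk cyc par]) in *.
  assert (Lb : length bs' = S (length bs)) by (unfold bs'; rewrite length_app; simpl; lia).
  split; [lia|]. split.
  { apply agree_trans with bs; auto. apply agree_mono with (length bs); auto. }
  split.
  - intros j Hj. destruct (Nat.eq_dec j (length bs)) as [->|Hne].
    + split; [exists par; split; auto|]. rewrite NC; auto.
    + destruct (Hc j) as [[p [Ep Hp']] Hcj]; [lia|].
      rewrite <- (agree_parent _ _ _ _ A) by lia. rewrite <- (agree_cycle _ _ _ _ A) by lia.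
      split; eauto.
  - intros j pj u Hj Hpj Hu Hx HnA Hh Hr.
    destruct (Nat.eq_dec j (length bs)) as [->|Hne].
    + rewrite NP in Hpj. inversion Hpj; subst pj. rewrite NR.
      apply uncle_refs_iff; auto.
      destruct Hx as [x [Ex Ax]].
      split; [lia|]. split; [right; intros Hin; specialize (Hsec u Hin); lia|].
      split.
      { exists x. split.
        - rewrite (agree_parent _ _ _ _ A) by lia. auto.
        - apply (agree_AncR n1 (length bs) bs bs'); auto. }
      split; [rewrite (agree_AncR n1 (length bs) bs bs'); auto|].
      split; [rewrite NH in Hh; rewrite (agree_height _ _ _ u A) by lia; auto|].
      intros a Ha. pose proof (AncR_le _ _ _ _ W Ha).
      rewrite (agree_refs _ _ _ _ A) by lia. apply Hr.
      apply (agree_AncR n1 (length bs) bs bs'); auto.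
    + assert (Hj' : j < length bs) by lia.
      rewrite <- (agree_parent _ _ _ _ A) in Hpj by lia.
      destruct (parent_lt _ _ _ _ W Hpj) as [Lt _].
      rewrite <- (agree_refs _ _ _ j A) by lia.
      apply (Hd j pj u); auto; try lia.
      * destruct Hx as [x [Ex Ax]]. exists x. split.
        -- rewrite (agree_parent _ _ _ _ A) by lia. auto.
        -- apply (agree_AncR n1 (length bs) bs bs'); auto. lia.
      * rewrite (agree_AncR n1 (length bs) bs bs'); auto. lia.
      * rewrite (agree_height _ _ _ j A), (agree_height _ _ _ u A) by lia. auto.
      * intros a Ha. pose proof (AncR_le _ _ _ _ W Ha).
        rewrite (agree_refs _ _ _ _ A) by lia. apply Hr.
        apply (agree_AncR n1 (length bs) bs bs'); auto. lia.
Qed.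

Definition InvLater n1 n t1 bs1 (s : state) : Prop :=
  GI n1 s /\ BP n1 n t1 bs1 (st_blocks s) /\
  (st_tip s = t1 \/ n <= st_tip s) /\
  (forall x, In x (st_secret s ++ phase_mem (st_phase s)) -> n <= x) /\
  2 <= st_cycle s /\ (3 <= st_cycle s -> n <= st_tip s).

Lemma mem_helper (L L' : list nat) n N :
  (forall x, In x L' -> N = x \/ In x L) -> (forall x, In x L -> n <= x) -> n <= N ->
  forall x, In x L' -> n <= x.
Proof. intros H1 H2 H3 x Hx. destruct (H1 x Hx) as [<-|H]; auto. Qed.

Lemma InvLater_step n1 n t1 bs1 s l :
  InvLater n1 n t1 bs1 s -> InvLater n1 n t1 bs1 (step n1 s l).
Proof.
  intros (G & Bp & Ht & Hm & Hc2 & Hc3).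
  pose proof (GI_step n1 s l G) as G'.
  destruct G as [W B].
  destruct s as [bs sec t c ph].
  cbn [st_blocks st_tip st_secret st_phase st_cycle] in *.
  assert (Hn : n <= length bs) by (destruct Bp; auto).
  unfold step in *. cbn [st_phase st_tip st_cycle st_blocks st_secret] in *.
  destruct ph as [|a|a h|[|a0 ach] [|h0 hch]]; destruct l; rewrite ?mine_eq in *;
    cbn [st_phase st_tip st_cycle st_blocks st_secret hd] in *.
  all: try match goal with |- context [Nat.eqb ?x 1] => destruct (Nat.eqb x 1) eqn:Eq end.
  all: try (simpl in Eq; discriminate).
  all: cbn [phase_mem app] in B, Hm.
  all: unfold InvLater; cbn [st_phase st_tip st_cycle st_blocks st_secret];
    split; [exact G'|]; split;
    [apply BP_mine; [exact W|exact Bp| | |exact Hc2|];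
      [ apply B; simpl; rewrite ?in_app_iff; simpl; rewrite ?in_app_iff; simpl; tauto
      | first [ exact Ht | right; apply Hm; simpl; rewrite ?in_app_iff; simpl; rewrite ?in_app_iff; simpl; tauto ]
      | intros y Hy; apply Hm; simpl; rewrite ?in_app_iff; simpl; tauto ] |].
  all: split; [first [ exact Ht | right; exact Hn | right; apply Hm; simpl; rewrite ?in_app_iff; simpl; tauto ]|].
  all: split; [(eapply mem_helper; [|exact Hm|exact Hn]); intros y Hy; simpl in *;
      rewrite ?in_app_iff in *; simpl in *; rewrite ?in_app_iff in *; simpl in *; tauto|].
  all: split; [lia|].
  all: intros H3; first [ exact Hn | apply Hc3; lia | apply Hm; simpl; rewrite ?in_app_iff; simpl; tauto ].
Qed.

Lemma InvLater_fold n1 n t1 bs1 w s :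
  InvLater n1 n t1 bs1 s -> InvLater n1 n t1 bs1 (fold_left (step n1) w s).
Proof.
  revert s; induction w as [|l w IH]; intros s H; simpl; auto. apply IH. apply InvLater_step; auto.
Qed.

Definition Wpred n1 (bs : list block) (t : nat) (i : nat) : bool :=
  negb (memb i (ancestors bs t)) &&
  match parent bs i with Some x => memb x (ancestors bs t) | None => false end &&
  forallb (fun a => negb (memb i (refs bs a))) (ancestors bs t) &&
  Nat.leb (S (height bs t) - height bs i) n1.

Definition Wst n1 (s : state) : nat :=
  length (filter (Wpred n1 (st_blocks s) (st_tip s)) (seq 1 (length (st_blocks s) - 1))).

Definition Vst (fin : state) : nat :=
  let bs := st_blocks fin in
  let ids := seq 0 (length bs) in
  length (filter (fun i =>
    is_uncle fin i && Nat.eqb (cycle_of bs i) 1 &&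
    existsb (fun j => official fin j && Nat.leb 2 (cycle_of bs j)
                      && memb i (refs bs j)) ids) ids).

Lemma V_Vst n1 u : V n1 u = Vst (run n1 u).
Proof. reflexivity. Qed.

Lemma chain n1 n t1 bs1 bs : WFB n1 bs -> BP n1 n t1 bs1 bs -> t1 < n ->
  forall j, n <= j < length bs ->
  (forall x, x < n -> (AncR bs x j <-> AncR bs x t1)) /\
  exists j0, AncR bs j0 j /\ n <= j0 /\ parent bs j0 = Some t1.
Proof.
  intros W (Hn & Ag & Hc & Hd) Ht1.
  intros j. induction j as [j IH] using lt_wf_ind. intros Hj.
  destruct (Hc j Hj) as [[p [Ep Hp]] _].
  destruct (parent_lt _ _ _ _ W Ep) as [Lt _].
  destruct Hp as [->|Hp].
  - split.
    + intros x Hx. split.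
      * intros H. apply AncR_inv in H. destruct H as [->|[p' [Ep' H]]]; [lia|].
        rewrite Ep in Ep'. inversion Ep'; subst; auto.
      * intros H. eapply AncR_step; eauto.
    + exists j. split; [constructor|]. split; [lia|auto].
  - destruct (IH p Lt) as [IH1 [j0 [A0 [N0 P0]]]]; [lia|].
    split.
    + intros x Hx. rewrite <- IH1 by auto. split.
      * intros H. apply AncR_inv in H. destruct H as [->|[p' [Ep' H]]]; [lia|].
        rewrite Ep in Ep'. inversion Ep'; subst; auto.
      * intros H. eapply AncR_step; eauto.
    + exists j0. split; [eapply AncR_trans; [exact A0|eapply AncR_step; [exact Ep|constructor]]|].
      auto.
Qed.

Lemma filter_false_len {A} (f : A -> bool) l : (forall x, In x l -> f x = false) ->
  length (filter f l) = 0.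
Proof.
  induction l as [|a l IH]; intros H; simpl; auto. rewrite H by (left; auto). apply IH.
  intros; apply H; simpl; auto.
Qed.

Lemma split_seq (f : nat -> bool) L n : 1 <= n -> n <= L -> f 0 = false ->
  (forall x, n <= x < L -> f x = false) ->
  length (filter f (seq 0 L)) = length (filter f (seq 1 (n - 1))).
Proof.
  intros H1 H2 H0 Hx. replace L with (1 + (n - 1) + (L - n)) by lia.
  rewrite !seq_app, !filter_app, !length_app. simpl. rewrite H0. simpl.
  replace (S (n - 1)) with n by lia.
  rewrite (filter_false_len _ (seq n (L - n))); [lia|].
  intros x Hin. apply in_seq in Hin. apply Hx. lia.
Qed.

Theorem later_V n1 S1 r :
  GI n1 S1 -> st_phase S1 = Idle -> st_secret S1 = [] -> st_cycle S1 = 2 ->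
  (forall i, 0 < i < length (st_blocks S1) -> cycle_of (st_blocks S1) i = 1) ->
  3 <= st_cycle (fold_left (step n1) r S1) ->
  Vst (fold_left (step n1) r S1) = Wst n1 S1.
Proof.
  intros G1 Hph Hsec Hc1 Hcyc Hc3.
  set (bs1 := st_blocks S1) in *. set (t1 := st_tip S1).
  set (n := length bs1).
  assert (W1 : WFB n1 bs1) by (destruct G1; auto).
  assert (Ht1 : t1 < n) by (destruct G1 as [_ B]; apply B; left; auto).
  assert (Hn1 : 1 <= n) by (destruct W1; auto).
  assert (I1 : InvLater n1 n t1 bs1 S1).
  { split; [auto|]. split.
    - split; [apply le_n|]. split; [intros i Hi; auto|].
      split; [intros j Hj; unfold n, bs1 in *; lia|]. intros j pj u Hj; unfold n, bs1 in *; lia.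
    - split; [left; auto|]. split; [rewrite Hsec, Hph; simpl; tauto|]. rewrite Hc1. lia. }
  pose proof (InvLater_fold n1 n t1 bs1 r S1 I1) as IF.
  set (F := fold_left (step n1) r S1) in *.
  destruct IF as (GF & BPF & HtF & HmF & Hc2F & Hc3F).
  set (bsF := st_blocks F) in *. set (tF := st_tip F) in *.
  assert (WF : WFB n1 bsF) by (destruct GF; auto).
  assert (HtF' : tF < length bsF) by (destruct GF as [_ B]; apply B; left; auto).
  specialize (Hc3F Hc3).
  pose proof BPF as (HnF & AgF & HcF & HdF).
  pose proof (chain n1 n t1 bs1 bsF WF BPF Ht1) as CH.
  assert (Off : forall x, x < n -> memb x (ancestors bsF tF) = memb x (ancestors bs1 t1)).
  { intros x Hx. apply eq_true_iff_eq.
    rewrite (memb_anc n1 bsF tF x WF HtF'), (memb_anc n1 bs1 t1 x W1 Ht1).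
    destruct (CH tF) as [C1 _]; [lia|]. rewrite C1 by auto.
    symmetry. apply (agree_AncR n1 n bs1 bsF); auto. }
  assert (Cyc : forall j, j < n -> cycle_of bsF j <= 1).
  { intros j Hj. rewrite <- (agree_cycle n bs1 bsF) by auto.
    destruct j as [|j]; [destruct W1 as (_ & _ & C0 & _); lia|]. rewrite Hcyc; auto. lia. }
  unfold Vst, Wst. fold bsF. fold bs1. fold t1. cbv zeta.
  rewrite (split_seq _ (length bsF) n); [| lia | lia | |].
  2:{ assert (cycle_of bsF 0 = 0) by (destruct WF as (_ & _ & C0 & _); auto).
      rewrite H. destruct (is_uncle F 0); reflexivity. }
  2:{ intros x Hx. destruct (HcF x) as [_ C]; [lia|].
      destruct (Nat.eqb (cycle_of bsF x) 1) eqn:E; [apply Nat.eqb_eq in E; lia|].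
      destruct (is_uncle F x); reflexivity. }
  f_equal. apply filter_ext_in. intros i Hi. apply in_seq in Hi.
  assert (Hin : i < n) by lia.
  assert (Eci : cycle_of bsF i = 1).
  { rewrite <- (agree_cycle n bs1 bsF) by auto. apply Hcyc. lia. }
  rewrite Eci. simpl (Nat.eqb 1 1). rewrite andb_true_r.
  unfold is_uncle, official. fold bsF. fold tF.
  rewrite Off by auto.
  rewrite <- (agree_parent n bs1 bsF i) by auto.
  unfold Wpred.
  destruct (parent bs1 i) as [x|] eqn:Epi; [|rewrite !andb_false_r; reflexivity].
  destruct (parent_lt _ _ _ _ W1 Epi) as [Ltx _].
  rewrite Off by lia.
  destruct (memb i (ancestors bs1 t1)) eqn:Mi; [reflexivity|].
  destruct (memb x (ancestors bs1 t1)) eqn:Mx; [|reflexivity].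
  cbn [negb andb]. apply eq_true_iff_eq.
  rewrite andb_true_iff, existsb_exists, forallb_forall, Nat.leb_le.
  assert (Hx1 : AncR bs1 x t1) by (apply (memb_anc n1 bs1 t1 x W1 Ht1); auto).
  assert (Hi1 : ~ AncR bs1 i t1).
  { intros H. apply (memb_anc n1 bs1 t1 i W1 Ht1) in H. congruence. }
  split.
  - intros [j [Hj Hc]]. apply in_seq in Hj.
    apply andb_true_iff in Hc as [Hc Hr]. apply andb_true_iff in Hc as [Ho Hcj].
    apply Nat.leb_le in Hcj. apply memb_In in Hr.
    assert (Hjn : n <= j) by (destruct (Nat.lt_ge_cases j n) as [L|L]; auto; specialize (Cyc j L); lia).
    pose proof WF as (_ & _ & _ & _ & _ & RS). destruct (RS j i Hr) as (pj & Epj & _ & _ & _ & Hh & Hr').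
    destruct (HcF j) as [[p [Ep Hp]] _]; [lia|]. rewrite Epj in Ep. inversion Ep; subst p.
    assert (Atp : AncR bsF t1 pj).
    { destruct Hp as [->|Hp]; [constructor|].
      assert (pj < j) by (destruct (parent_lt _ _ _ _ WF Epj); lia).
      destruct (CH pj) as [C _]; [lia|]. apply C; auto. constructor. }
    split.
    + intros a Ha. apply (ancestors_iff n1 bs1 t1 a W1 Ht1) in Ha.
      pose proof (AncR_le _ _ _ _ W1 Ha).
      apply negb_true_iff, memb_false. rewrite (agree_refs n bs1 bsF a AgF) by lia.
      apply Hr'. eapply AncR_trans; [|exact Atp].
      apply (agree_AncR n1 n bs1 bsF); auto.
    + destruct (parent_lt _ _ _ _ WF Epj) as [_ Hhj].
      pose proof (AncR_height _ _ _ _ WF Atp).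
      rewrite (agree_height n bs1 bsF t1 AgF Ht1), (agree_height n bs1 bsF i AgF Hin). lia.
  - intros [U Hgt]. destruct (CH tF) as [_ [j0 [A0 [N0 P0]]]]; [lia|].
    pose proof (AncR_le _ _ _ _ WF A0) as Lj0.
    exists j0. split; [apply in_seq; lia|].
    rewrite !andb_true_iff. split; [split|].
    + apply (memb_anc n1 bsF tF j0 WF HtF'); auto.
    + apply Nat.leb_le. destruct (HcF j0) as [_ C]; [lia|]. auto.
    + apply memb_In. apply (HdF j0 t1 i); auto; try lia.
      * exists x. split.
        -- rewrite <- (agree_parent n bs1 bsF i AgF Hin). auto.
        -- apply (agree_AncR n1 n bs1 bsF); auto; lia.
      * rewrite <- (agree_AncR n1 n bs1 bsF); auto.
      * destruct (parent_lt _ _ _ _ WF P0) as [_ Hh0]. rewrite Hh0.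
        rewrite <- (agree_height n bs1 bsF t1 AgF Ht1), <- (agree_height n bs1 bsF i AgF Hin). lia.
      * intros a Ha. pose proof (AncR_le _ _ _ _ WF Ha).
        rewrite <- (agree_AncR n1 n bs1 bsF) in Ha by auto.
        apply (ancestors_iff n1 bs1 t1 a W1 Ht1) in Ha.
        specialize (U a Ha). apply negb_true_iff, memb_false in U.
        rewrite <- (agree_refs n bs1 bsF a AgF) by lia. auto.
Qed.

Open Scope nat_scope.

Record FInv n1 (c : list letter) (bs : list block) (ach hch : list nat) : Prop := {
  fi_wf : WFB n1 bs;
  fi_cyc : forall i, 0 < i < length bs -> cycle_of bs i = 1;
  fi_ach : ach <> [];
  fi_a : 0 < hd 0 ach < length bs;
  fi_aatt : att bs (hd 0 ach) = true;
  fi_anc : forall x, AncR bs x (hd 0 ach) -> x = 0 \/ att bs x = true;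
  fi_attanc : forall i, 0 < i < length bs -> att bs i = true -> AncR bs i (hd 0 ach);
  fi_hpar : forall i, 0 < i < length bs -> att bs i = false ->
      parent bs i = Some 0 \/ exists p, parent bs i = Some p /\ 0 < p /\ att bs p = false;
  fi_uniq : forall i j, 0 < i < length bs -> 0 < j < length bs -> att bs i = false ->
      att bs j = false -> parent bs i = Some 0 -> parent bs j = Some 0 -> i = j;
  fi_height : height bs (hd 0 ach) = length ach;
  fi_noh : hch = [] -> forall i, 0 < i < length bs -> att bs i = true;
  fi_h : forall h, hd_error hch = Some h -> 0 < h < length bs /\ att bs h = false;
  fi_nA : length ach = nA c;
  fi_nH : length hch = nH c;
  fi_pure : pureb c = true <-> (forall i j, 0 < i < length bs -> 0 < j < length bs ->
      att bs i = true -> att bs j = false -> i < j);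
  fi_viol : (exists i j, 0 < i < length bs /\ 0 < j < length bs /\ att bs i = true /\
      att bs j = false /\ j < i) ->
      (exists h1 x, 0 < h1 < length bs /\ att bs h1 = false /\ parent bs h1 = Some 0 /\
         0 < x < length bs /\ att bs x = true /\ In h1 (refs bs x)) \/ n1 < length ach;
  fi_h1 : hch <> [] -> exists h1, 0 < h1 < length bs /\ att bs h1 = false /\ parent bs h1 = Some 0
}.

Lemma AncR_new n1 bs sec attk cyc par x : WFB n1 bs -> par < length bs ->
  (AncR (bs ++ [newblock n1 bs sec attk cyc par]) x (length bs) <-> x = length bs \/ AncR bs x par).
Proof.
  intros W Hp. pose proof (agree_app bs (newblock n1 bs sec attk cyc par)) as A.
  split.
  - intros H. apply AncR_inv in H. destruct H as [->|[p [Ep H]]]; auto.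
    rewrite new_parent in Ep. inversion Ep; subst. right.
    apply (agree_AncR n1 (length bs) bs (bs ++ [newblock n1 bs sec attk cyc p])); auto.
  - intros [->|H]; [constructor|]. eapply AncR_step; [apply new_parent|].
    apply (agree_AncR n1 (length bs) bs (bs ++ [newblock n1 bs sec attk cyc par])); auto.
Qed.

Lemma att_old n1 bs sec attk cyc par i : i < length bs ->
  att (bs ++ [newblock n1 bs sec attk cyc par]) i = att bs i.
Proof. intros H. symmetry. apply (agree_att _ _ _ _ (agree_app _ _) H). Qed.
Lemma parent_old n1 bs sec attk cyc par i : i < length bs ->
  parent (bs ++ [newblock n1 bs sec attk cyc par]) i = parent bs i.
Proof. intros H. symmetry. apply (agree_parent _ _ _ _ (agree_app _ _) H). Qed.
Lemma height_old n1 bs sec attk cyc par i : i < length bs ->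
  height (bs ++ [newblock n1 bs sec attk cyc par]) i = height bs i.
Proof. intros H. symmetry. apply (agree_height _ _ _ _ (agree_app _ _) H). Qed.
Lemma refs_old n1 bs sec attk cyc par i : i < length bs ->
  refs (bs ++ [newblock n1 bs sec attk cyc par]) i = refs bs i.
Proof. intros H. symmetry. apply (agree_refs _ _ _ _ (agree_app _ _) H). Qed.
Lemma cycle_old n1 bs sec attk cyc par i : i < length bs ->
  cycle_of (bs ++ [newblock n1 bs sec attk cyc par]) i = cycle_of bs i.
Proof. intros H. symmetry. apply (agree_cycle _ _ _ _ (agree_app _ _) H). Qed.
Lemma AncR_old n1 bs sec attk cyc par x i : WFB n1 bs -> i < length bs ->
  (AncR (bs ++ [newblock n1 bs sec attk cyc par]) x i <-> AncR bs x i).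
Proof. intros W H. symmetry. apply (agree_AncR n1 (length bs)); auto. apply agree_app. Qed.

Lemma len_new n1 bs sec attk cyc par : length (bs ++ [newblock n1 bs sec attk cyc par]) = S (length bs).
Proof. rewrite length_app. simpl. lia. Qed.

Lemma FInv_A n1 c bs ach hch sec : FInv n1 c bs ach hch ->
  FInv n1 (c ++ [LA]) (bs ++ [newblock n1 bs sec true 1 (hd 0 ach)]) (length bs :: ach) hch.
Proof.
  intros FI. destruct FI as [W Cy Ne Ha Haa Anc AttAnc Hpar Uniq Hh Noh Hhh NA NH Pure Viol H1].
  set (a := hd 0 ach) in *.
  pose proof (len_new n1 bs sec true 1 a) as Ln.
  pose proof (new_att n1 bs sec true 1 a) as Na.
  pose proof (new_parent n1 bs sec true 1 a) as Np.
  pose proof (new_height n1 bs sec true 1 a) as Nh.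
  pose proof (new_refs n1 bs sec true 1 a) as Nr.
  pose proof (new_cycle n1 bs sec true 1 a) as Nc.
  pose proof (mine_WFB n1 bs sec true 1 a W (proj2 Ha)) as W'.
  set (bs' := bs ++ [newblock n1 bs sec true 1 a]) in *.
  assert (L0 : 1 <= length bs) by (destruct W; lia).
  assert (AO : forall i, i < length bs -> att bs' i = att bs i) by (intros; apply att_old; auto).
  assert (PO : forall i, i < length bs -> parent bs' i = parent bs i) by (intros; apply parent_old; auto).
  assert (HO : forall i, i < length bs -> height bs' i = height bs i) by (intros; apply height_old; auto).
  assert (RO : forall i, i < length bs -> refs bs' i = refs bs i) by (intros; apply refs_old; auto).
  assert (AnO : forall x i, i < length bs -> (AncR bs' x i <-> AncR bs x i)) by (intros; apply AncR_old; auto).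
  assert (AnN : forall x, AncR bs' x (length bs) <-> x = length bs \/ AncR bs x a)
    by (intros; apply AncR_new; auto; apply Ha).
  constructor; cbn [hd length]; rewrite ?Ln.
  - exact W'.
  - intros i Hi. destruct (Nat.eq_dec i (length bs)) as [->|Hne]; [exact Nc|].
    unfold bs'. rewrite cycle_old by lia. apply Cy. lia.
  - discriminate.
  - lia.
  - exact Na.
  - intros x Hx. apply AnN in Hx. destruct Hx as [->|Hx]; [right; exact Na|].
    pose proof (AncR_le _ _ _ _ W Hx). destruct (Anc x Hx) as [->|Hatt]; [left; auto|].
    right. rewrite AO by lia. auto.
  - intros i Hi Hatt. destruct (Nat.eq_dec i (length bs)) as [->|Hne]; [constructor|].
    rewrite AO in Hatt by lia. apply AnN. right. apply AttAnc; auto. lia.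
  - intros i Hi Hatt. destruct (Nat.eq_dec i (length bs)) as [->|Hne]; [congruence|].
    rewrite AO in Hatt by lia. rewrite PO by lia.
    destruct (Hpar i) as [E|[p [E [Hp Hpa]]]]; auto; [lia|].
    destruct (parent_lt _ _ _ _ W E). right. exists p. rewrite AO by lia. auto.
  - intros i j Hi Hj Ai Aj Pi Pj.
    destruct (Nat.eq_dec i (length bs)) as [->|Hne]; [congruence|].
    destruct (Nat.eq_dec j (length bs)) as [->|Hne']; [congruence|].
    rewrite AO in Ai, Aj by lia. rewrite PO in Pi, Pj by lia. apply Uniq; auto; lia.
  - rewrite Nh, Hh. reflexivity.
  - intros E i Hi. destruct (Nat.eq_dec i (length bs)) as [->|Hne]; [exact Na|].
    rewrite AO by lia. apply Noh; auto. lia.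
  - intros h E. destruct (Hhh h E). rewrite AO by lia. split; [lia|auto].
  - rewrite nA_app, NA. simpl. lia.
  - rewrite nH_app, NH. simpl. lia.
  - rewrite pureb_snoc_A, andb_true_iff, Pure, Nat.eqb_eq, <- NH. split.
    + intros [P E] i j Hi Hj Ai Aj.
      destruct (Nat.eq_dec j (length bs)) as [->|Hne]; [congruence|].
      assert (hch = []) by (destruct hch; [auto|discriminate]).
      rewrite AO in Aj by lia. rewrite (Noh H j) in Aj; [discriminate|lia].
    + intros P. split.
      * intros i j Hi Hj Ai Aj. apply P; try lia; rewrite AO by lia; auto.
      * destruct hch as [|h hch]; [reflexivity|]. exfalso.
        destruct (Hhh h eq_refl) as [Hh1 Hh2].
        assert (length bs < h) by (apply P; try lia; rewrite ?Na, ?AO; auto; lia). lia.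
  - intros [i [j (Hi & Hj & Ai & Aj & Lt)]].
    assert (Hj' : j < length bs) by (destruct (Nat.eq_dec j (length bs)); [subst; congruence|lia]).
    rewrite AO in Aj by auto.
    assert (Tr : ((exists h1 x, 0 < h1 < length bs /\ att bs h1 = false /\ parent bs h1 = Some 0 /\
         0 < x < length bs /\ att bs x = true /\ In h1 (refs bs x)) \/ n1 < length ach) ->
       (exists h1 x, 0 < h1 < S (length bs) /\ att bs' h1 = false /\ parent bs' h1 = Some 0 /\
         0 < x < S (length bs) /\ att bs' x = true /\ In h1 (refs bs' x)) \/ n1 < S (length ach)).
    { intros [(h1 & x & Hh1 & Ah1 & Ph1 & Hx & Ax & Rx)|Hl]; [left|right; lia].
      exists h1, x. rewrite AO, PO, AO, RO by lia. repeat split; auto; lia. }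
    destruct (classic (exists i j, 0 < i < length bs /\ 0 < j < length bs /\ att bs i = true /\
      att bs j = false /\ j < i)) as [V|NV]; [apply Tr; apply Viol; auto|].
    destruct (Nat.eq_dec i (length bs)) as [->|Hne].
    2:{ exfalso. apply NV. exists i, j. rewrite AO in Ai by lia. repeat split; auto; lia. }
    assert (Hne' : hch <> []).
    { intros E. rewrite (Noh E j) in Aj; [discriminate|lia]. }
    destruct (H1 Hne') as (h1 & Hh1 & Ah1 & Ph1).
    destruct (le_lt_dec (length ach) n1) as [Le|Gt]; [|right; lia].
    left. exists h1, (length bs). rewrite AO, PO by lia.
    split; [lia|]. split; [auto|]. split; [auto|]. split; [lia|]. split; [exact Na|].
    rewrite Nr. apply uncle_refs_iff; auto; [apply Ha|].
    split; [lia|]. split; [left; auto|]. split; [exists 0; split; auto; apply (AncR_0 n1); auto; lia|].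
    split.
    { intros HA. destruct (Anc h1 HA) as [E|E]; [lia|congruence]. }
    split.
    { destruct (parent_lt _ _ _ _ W Ph1) as [_ E]. rewrite E, Hh.
      destruct W as (_ & _ & _ & H0 & _). rewrite H0. lia. }
    intros b Hb HIn. destruct (Anc b Hb) as [->|Ab].
    + rewrite (refs_0 n1 bs W) in HIn. destruct HIn.
    + pose proof (refs_lt _ _ _ _ W HIn) as Lt1.
      pose proof (AncR_le _ _ _ _ W Hb).
      apply NV. exists b, h1. repeat split; auto; try lia.
  - intros E. destruct (H1 E) as (h1 & Hh1 & Ah1 & Ph1). exists h1.
    rewrite AO, PO by lia. repeat split; auto; lia.
Qed.

Lemma FInv_H n1 c bs ach hch sec l : isH l = true -> FInv n1 c bs ach hch ->
  FInv n1 (c ++ [l]) (bs ++ [newblock n1 bs sec false 1 (hd 0 hch)]) ach (length bs :: hch).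
Proof.
  intros Hl FI. destruct FI as [W Cy Ne Ha Haa Anc AttAnc Hpar Uniq Hh Noh Hhh NA NH Pure Viol H1].
  set (q := hd 0 hch) in *.
  assert (L0 : 1 <= length bs) by (destruct W; lia).
  assert (Hq : q < length bs /\ (hch = [] -> q = 0) /\ (hch <> [] -> 0 < q /\ att bs q = false)).
  { unfold q. destruct hch as [|h hch]; simpl.
    - split; [lia|]. split; auto. intros C; congruence.
    - destruct (Hhh h eq_refl). split; [lia|]. split; [intros C; discriminate|]. intros _; split; [lia|auto]. }
  pose proof (len_new n1 bs sec false 1 q) as Ln.
  pose proof (new_att n1 bs sec false 1 q) as Na.
  pose proof (new_parent n1 bs sec false 1 q) as Np.
  pose proof (new_cycle n1 bs sec false 1 q) as Nc.
  pose proof (mine_WFB n1 bs sec false 1 q W (proj1 Hq)) as W'.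
  set (bs' := bs ++ [newblock n1 bs sec false 1 q]) in *.
  assert (AO : forall i, i < length bs -> att bs' i = att bs i) by (intros; apply att_old; auto).
  assert (PO : forall i, i < length bs -> parent bs' i = parent bs i) by (intros; apply parent_old; auto).
  assert (HO : forall i, i < length bs -> height bs' i = height bs i) by (intros; apply height_old; auto).
  assert (RO : forall i, i < length bs -> refs bs' i = refs bs i) by (intros; apply refs_old; auto).
  assert (AnO : forall x i, i < length bs -> (AncR bs' x i <-> AncR bs x i)) by (intros; apply AncR_old; auto).
  constructor; cbn [hd length hd_error]; rewrite ?Ln.
  - exact W'.
  - intros i Hi. destruct (Nat.eq_dec i (length bs)) as [->|Hne]; [exact Nc|].
    unfold bs'. rewrite cycle_old by lia. apply Cy. lia.
  - exact Ne.
  - lia.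
  - rewrite AO by lia. auto.
  - intros x Hx. apply AnO in Hx; [|lia]. pose proof (AncR_le _ _ _ _ W Hx).
    destruct (Anc x Hx) as [->|Hatt]; [left; auto|]. right. rewrite AO by lia. auto.
  - intros i Hi Hatt. destruct (Nat.eq_dec i (length bs)) as [->|Hne]; [congruence|].
    rewrite AO in Hatt by lia. apply AnO; [lia|]. apply AttAnc; auto. lia.
  - intros i Hi Hatt. destruct (Nat.eq_dec i (length bs)) as [->|Hne].
    + rewrite Np. destruct hch as [|h hch'].
      * left. destruct Hq as [_ [E _]]. rewrite E; auto.
      * right. exists q. destruct Hq as [Hq1 [_ E]]. destruct E as [E1 E2]; [discriminate|].
        split; auto. split; auto. rewrite AO; auto.
    + rewrite AO in Hatt by lia. rewrite PO by lia.
      destruct (Hpar i) as [E|[p [E [Hp Hpa]]]]; auto; [lia|].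
      destruct (parent_lt _ _ _ _ W E). right. exists p. rewrite AO by lia. auto.
  - intros i j Hi Hj Ai Aj Pi Pj.
    destruct (Nat.eq_dec i (length bs)) as [->|Hne];
    destruct (Nat.eq_dec j (length bs)) as [->|Hne']; auto.
    + exfalso. rewrite Np in Pi. inversion Pi.
      destruct hch as [|h hch']; [|destruct Hq as [_ [_ E]]; destruct E; [discriminate|lia]].
      rewrite AO in Aj by lia. rewrite (Noh eq_refl j) in Aj; [discriminate|lia].
    + exfalso. rewrite Np in Pj. inversion Pj.
      destruct hch as [|h hch']; [|destruct Hq as [_ [_ E]]; destruct E; [discriminate|lia]].
      rewrite AO in Ai by lia. rewrite (Noh eq_refl i) in Ai; [discriminate|lia].
    + rewrite AO in Ai, Aj by lia. rewrite PO in Pi, Pj by lia. apply Uniq; auto; lia.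
  - rewrite HO by lia. auto.
  - discriminate.
  - intros h E. inversion E; subst. split; [lia|exact Na].
  - rewrite nA_app, NA. destruct l; [discriminate| |]; simpl; lia.
  - rewrite nH_app, NH. destruct l; [discriminate| |]; simpl; lia.
  - rewrite pureb_snoc_H by auto. rewrite Pure. split.
    + intros P i j Hi Hj Ai Aj.
      destruct (Nat.eq_dec i (length bs)) as [->|Hne]; [congruence|].
      destruct (Nat.eq_dec j (length bs)) as [->|Hne']; [lia|].
      rewrite AO in Ai, Aj by lia. apply P; auto; lia.
    + intros P i j Hi Hj Ai Aj. apply P; try lia; rewrite AO by lia; auto.
  - intros [i [j (Hi & Hj & Ai & Aj & Lt)]].
    assert (Hi' : i < length bs) by (destruct (Nat.eq_dec i (length bs)); [subst; congruence|lia]).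
    assert (Hj' : j < length bs) by lia.
    rewrite AO in Ai, Aj by lia.
    destruct (Viol (ex_intro _ i (ex_intro _ j (conj (conj (proj1 Hi) Hi') (conj (conj (proj1 Hj) Hj') (conj Ai (conj Aj Lt)))))))
      as [(h1 & x & Hh1 & Ah1 & Ph1 & Hx & Ax & Rx)|Hl']; [left|right; auto].
    exists h1, x. rewrite AO, PO, AO, RO by lia. repeat split; auto; lia.
  - intros _. destruct hch as [|h hch'].
    + exists (length bs). split; [lia|]. split; [exact Na|]. rewrite Np.
      destruct Hq as [_ [E _]]. rewrite E; auto.
    + destruct (H1 ltac:(discriminate)) as (h1 & Hh1 & Ah1 & Ph1). exists h1.
      rewrite AO, PO by lia. repeat split; auto; lia.
Qed.

Definition bs_one : list block := [genesis; mkBlock 1 (Some 0) true 1 []].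

Lemma run_one n1 : run n1 [LA] = mkState bs_one [1] 0 1 (One 1).
Proof. reflexivity. Qed.

Lemma FInv_one n1 : FInv n1 [LA] bs_one [1] [].
Proof.
  assert (W : WFB n1 bs_one).
  { pose proof (GI_run n1 [LA]) as [W _]. rewrite run_one in W. exact W. }
  assert (A1 : forall x, AncR bs_one x 1 -> x = 0 \/ x = 1).
  { intros x H. apply AncR_inv in H. destruct H as [->|[p [Ep H]]]; [right; auto|].
    inversion Ep; subst. apply AncR_inv in H. destruct H as [->|[p [Ep' _]]]; [left; auto|].
    discriminate. }
  constructor; cbn [hd length hd_error].
  - exact W.
  - intros i Hi. simpl in Hi. assert (i = 1) by lia. subst. reflexivity.
  - discriminate.
  - simpl. lia.
  - reflexivity.
  - intros x Hx. destruct (A1 x Hx) as [-> | ->]; [left|right]; auto.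
  - intros i Hi _. simpl in Hi. assert (i = 1) by lia. subst. constructor.
  - intros i Hi Ha. simpl in Hi. assert (i = 1) by lia. subst. discriminate.
  - intros i j Hi. simpl in Hi. assert (i = 1) by lia. subst. discriminate.
  - reflexivity.
  - intros _ i Hi. simpl in Hi. assert (i = 1) by lia. subst. reflexivity.
  - intros h E. discriminate.
  - reflexivity.
  - reflexivity.
  - simpl. split; [intros _ i j Hi Hj Ai Aj; assert (j = 1) by lia; subst; discriminate|auto].
  - intros (i & j & Hi & Hj & Ai & Aj & Lt). simpl in Hi, Hj. assert (j = 1) by lia. subst. discriminate.
  - intros C; congruence.
Qed.

Lemma release_W n1 c bs ach hch sec l : isH l = true -> FInv n1 c bs ach hch ->
  Wst n1 (mkState (bs ++ [newblock n1 bs sec false 1 (hd 0 hch)]) [] (hd 0 ach) 2 Idle) =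
  if pureb (c ++ [l]) && Nat.leb (length ach) n1 then 1 else 0.
Proof.
  intros Hl FI. pose proof (FInv_H n1 c bs ach hch sec l Hl FI) as FI'.
  set (bs' := bs ++ [newblock n1 bs sec false 1 (hd 0 hch)]) in *.
  set (c' := c ++ [l]) in *.
  destruct FI' as [W Cy Ne Ha Haa Anc AttAnc Hpar Uniq Hh Noh Hhh NA NH Pure Viol H1].
  set (a := hd 0 ach) in *.
  destruct (H1 ltac:(discriminate)) as (h1 & Hh1 & Ah1 & Ph1).
  assert (Ha' : a < length bs') by lia.
  assert (ClA : forall i, 0 < i < length bs' -> Wpred n1 bs' a i = true -> i = h1).
  { intros i Hi Hw. unfold Wpred in Hw.
    apply andb_true_iff in Hw as [Hw _]. apply andb_true_iff in Hw as [Hw _].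
    apply andb_true_iff in Hw as [Hw1 Hw2]. apply negb_true_iff, memb_false in Hw1.
    rewrite (ancestors_iff n1 bs' a i W Ha') in Hw1.
    destruct (parent bs' i) as [x|] eqn:Pi; [|discriminate].
    apply (memb_anc n1 bs' a x W Ha') in Hw2.
    destruct (att bs' i) eqn:Ai; [exfalso; apply Hw1; apply AttAnc; auto|].
    destruct (Hpar i Hi Ai) as [E|[p [E [Hp Ap]]]].
    - apply Uniq; auto.
    - rewrite Pi in E. inversion E; subst p. destruct (Anc x Hw2) as [E'|E']; [lia|congruence]. }
  assert (NotA : ~ AncR bs' h1 a).
  { intros HA. destruct (Anc h1 HA) as [E|E]; [lia|congruence]. }
  assert (Hgt : S (height bs' a) - height bs' h1 = length ach).
  { destruct (parent_lt _ _ _ _ W Ph1) as [_ E]. rewrite E, Hh.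
    destruct W as (_ & _ & _ & H0 & _). rewrite H0. lia. }
  assert (ClB : Wpred n1 bs' a h1 = pureb c' && Nat.leb (length ach) n1).
  { unfold Wpred. rewrite Ph1, Hgt.
    assert (M1 : memb h1 (ancestors bs' a) = false).
    { apply memb_false. rewrite (ancestors_iff n1 bs' a h1 W Ha'). auto. }
    assert (M0 : memb 0 (ancestors bs' a) = true).
    { apply (memb_anc n1 bs' a 0 W Ha'). apply (AncR_0 n1); auto. }
    rewrite M1, M0. cbn [negb andb].
    destruct (pureb c') eqn:Pc.
    - assert (U : forallb (fun b => negb (memb h1 (refs bs' b))) (ancestors bs' a) = true).
      { apply forallb_forall. intros b Hb. apply (ancestors_iff n1 bs' a b W Ha') in Hb.
        apply negb_true_iff, memb_false. intros HIn.
        destruct (Anc b Hb) as [->|Ab].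
        - rewrite (refs_0 n1 bs' W) in HIn. destruct HIn.
        - pose proof (refs_lt _ _ _ _ W HIn). pose proof (AncR_le _ _ _ _ W Hb).
          assert (b < h1) by (apply (proj1 Pure eq_refl); auto; lia). lia. }
      rewrite U. reflexivity.
    - destruct (Nat.leb (length ach) n1) eqn:Le; [|apply andb_false_r].
      apply Nat.leb_le in Le.
      assert (V : exists i j, 0 < i < length bs' /\ 0 < j < length bs' /\ att bs' i = true /\
         att bs' j = false /\ j < i).
      { apply NNPP. intros NV. assert (FF : false = true); [|discriminate].
        apply Pure. intros i j Hi Hj Ai Aj. destruct (lt_dec i j) as [L|L]; auto.
        exfalso. apply NV. exists i, j. repeat split; auto; try lia.
        destruct (Nat.eq_dec i j); [subst; congruence|lia]. }
      destruct (Viol V) as [(h1' & x & Hh1' & Ah1' & Ph1' & Hx & Ax & Rx)|Gt]; [|lia].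
      assert (h1' = h1) by (apply Uniq; auto). subst h1'.
      assert (U : forallb (fun b => negb (memb h1 (refs bs' b))) (ancestors bs' a) = false).
      { apply not_true_iff_false. intros U. rewrite forallb_forall in U.
        assert (Inx : In x (ancestors bs' a)) by (apply (ancestors_iff n1 bs' a x W Ha'); apply AttAnc; auto).
        specialize (U x Inx). apply negb_true_iff, memb_false in U. auto. }
      rewrite U. reflexivity. }
  unfold Wst. cbn [st_blocks st_tip]. fold a.
  destruct (pureb c' && Nat.leb (length ach) n1) eqn:Cond.
  - apply count_one with h1; [apply seq_NoDup| apply in_seq; lia | rewrite ClB; auto |].
    intros x Hx Hw. apply in_seq in Hx. apply ClA; auto. lia.
  - apply count_zero. intros x Hx. apply in_seq in Hx.
    destruct (Wpred n1 bs' a x) eqn:E; auto.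
    assert (x = h1) by (apply ClA; auto; lia). subst. rewrite ClB in E. congruence.
Qed.

Open Scope nat_scope.

Definition bs_tie : list block :=
  [genesis; mkBlock 1 (Some 0) true 1 []; mkBlock 1 (Some 0) false 1 []].
Definition s_tie : state := mkState bs_tie [] 0 1 (Tie 1 2).

Lemma run_snoc n1 c l : run n1 (c ++ [l]) = step n1 (run n1 c) l.
Proof. unfold run. rewrite fold_left_app. reflexivity. Qed.

Lemma cyc_run n1 c : st_cycle (run n1 c) = cnt c.
Proof. unfold cnt. rewrite <- (abs_run n1 c). reflexivity. Qed.

Definition C1Inv n1 (c : list letter) (s : state) : Prop :=
  (c = [] /\ s = init_state) \/
  (c = [LA] /\ s = mkState bs_one [1] 0 1 (One 1)) \/
  ((c = [LA; LHg] \/ c = [LA; LHn]) /\ s = s_tie) \/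
  (exists ach hch, st_phase s = Fork ach hch /\ st_tip s = 0 /\ st_cycle s = 1 /\
      FInv n1 c (st_blocks s) ach hch).

Lemma C1_step n1 c s l : C1Inv n1 c s -> st_cycle (step n1 s l) = 1 ->
  C1Inv n1 (c ++ [l]) (step n1 s l).
Proof.
  intros [[-> ->]|[[-> ->]|[[Hc ->]|(ach & hch & Hph & Ht & Hc & FI)]]] Hcy.
  - destruct l; [|discriminate|discriminate]. right; left. split; reflexivity.
  - right; right. destruct l.
    + right. exists [2; 1], []. split; [reflexivity|]. split; [reflexivity|]. split; [reflexivity|].
      exact (FInv_A n1 [LA] bs_one [1] [] [1] (FInv_one n1)).
    + left. split; [left; reflexivity|reflexivity].
    + left. split; [right; reflexivity|reflexivity].
  - destruct l; discriminate.
  - right; right; right. destruct s as [bs sec t cy ph]. cbn in Hph, Ht, Hc, FI. subst.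
    unfold step in *. cbn [st_phase st_tip st_cycle st_blocks st_secret] in *.
    destruct l; rewrite mine_eq in *; cbn [st_phase st_tip st_cycle st_blocks st_secret] in *.
    + exists (length bs :: ach), hch. split; [reflexivity|]. split; [reflexivity|].
      split; [reflexivity|]. apply FInv_A; auto.
    + destruct (Nat.eqb (length ach - S (length hch)) 1); [discriminate|].
      exists ach, (length bs :: hch). split; [reflexivity|]. split; [reflexivity|].
      split; [reflexivity|]. apply FInv_H; auto.
    + destruct (Nat.eqb (length ach - S (length hch)) 1); [discriminate|].
      exists ach, (length bs :: hch). split; [reflexivity|]. split; [reflexivity|].
      split; [reflexivity|]. apply FInv_H; auto.
Qed.

Lemma C1_run n1 c : cnt c = 1 -> C1Inv n1 c (run n1 c).
Proof.
  induction c as [|l c IH] using rev_ind; intros H.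
  - left. split; reflexivity.
  - assert (Hc : cnt c = 1) by (pose proof (cnt_mono c [l]); pose proof (cnt_ge1 c); lia).
    rewrite run_snoc. apply C1_step; auto.
    rewrite <- run_snoc, cyc_run. auto.
Qed.

Lemma first_split u : 2 <= cnt u ->
  exists c l r, u = c ++ l :: r /\ cnt c = 1 /\ cnt (c ++ [l]) = 2.
Proof.
  induction u as [|l u IH] using rev_ind; intros H.
  - unfold cnt in H; simpl in H; lia.
  - destruct (le_lt_dec 2 (cnt u)) as [Le|Lt].
    + destruct (IH Le) as (c & l' & r & -> & H1 & H2). exists c, l', (r ++ [l]).
      rewrite <- app_assoc. simpl. auto.
    + exists u, l, []. split; [reflexivity|].
      pose proof (cnt_ge1 u). destruct (cnt_snoc u l) as [E|[E _]]; lia.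
Qed.

Lemma nonpure n1 c l r : cnt c = 1 -> cnt (c ++ [l]) = 2 -> pureb (c ++ [l]) = false ->
  gcount n1 (c ++ l :: r) = 0.
Proof.
  intros H1 H2 Hp. apply gcount_zero. intros L HL.
  destruct (startsAH L (pred L) (c ++ l :: r)) eqn:E; auto. exfalso.
  replace (pred L) with (L - 1) in E by lia.
  destruct (sAH_cnt L _ HL E) as [A1 A2].
  set (u := c ++ l :: r) in *.
  assert (Fk : firstn (S (length c)) u = c ++ [l]).
  { unfold u. rewrite firstn_app. rewrite firstn_all2 by lia.
    replace (S (length c) - length c) with 1 by lia. reflexivity. }
  destruct (lt_eq_lt_dec (2 * L - 1) (S (length c))) as [[Lt|Eq]|Gt].
  - assert (Fc : firstn (2 * L - 1) u = firstn (2 * L - 1) c).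
    { unfold u. rewrite firstn_app. replace (2 * L - 1 - length c) with 0 by lia.
      rewrite app_nil_r. reflexivity. }
    destruct (firstn_prefix c (2 * L - 1) (length c)) as [w Hw]; [lia|].
    rewrite firstn_all in Hw. pose proof (cnt_mono (firstn (2 * L - 1) c) w).
    rewrite <- Hw in H. rewrite <- Fc in H. unfold cnt at 1 in H. rewrite A1 in H. simpl in H. lia.
  - rewrite Eq in A1. rewrite Fk in A1.
    pose proof (starts_pure L (L - 1) u E). replace (L + (L - 1)) with (S (length c)) in H by lia.
    rewrite Fk in H. congruence.
  - pose proof (cnt_firstn_mono u (S (length c)) (2 * L - 2)). rewrite Fk in H. lia.
Qed.

Lemma gcount_H n1 l r : isH l = true -> gcount n1 (l :: r) = 0.
Proof.
  intros Hl. apply gcount_zero. intros L HL. destruct L as [|L]; [lia|].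
  destruct l; [discriminate|reflexivity|reflexivity].
Qed.

Lemma gcount_AH n1 l l' r : isH l = true -> gcount n1 (LA :: l :: l' :: r) = 0.
Proof.
  intros Hl. apply gcount_zero. intros L HL. destruct L as [|[|L]]; [lia|lia|].
  destruct l; [discriminate|reflexivity|reflexivity].
Qed.

Definition S1facts (S1 : state) : Prop :=
  st_phase S1 = Idle /\ st_secret S1 = [] /\ st_cycle S1 = 2 /\
  (forall i, 0 < i < length (st_blocks S1) -> cycle_of (st_blocks S1) i = 1).

Lemma C1_end n1 c l : 2 <= n1 -> cnt c = 1 -> cnt (c ++ [l]) = 2 ->
  S1facts (run n1 (c ++ [l])) /\ forall r, Wst n1 (run n1 (c ++ [l])) = gcount n1 (c ++ l :: r).
Proof.
  intros Hn1 H1 H2. pose proof (C1_run n1 c H1) as CI.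
  assert (H2' : st_cycle (step n1 (run n1 c) l) = 2) by (rewrite <- run_snoc, cyc_run; auto).
  rewrite run_snoc.
  destruct n1 as [|[|k]]; [lia|lia|].
  remember (run (S (S k)) c) as s0 eqn:Es0. clear Es0.
  destruct CI as [[-> ->]|[[-> ->]|[[Hc ->]|(ach & hch & Hph & Ht & Hc & FI)]]].
  - destruct l; [discriminate H2| |].
    + split.
      * split; [reflexivity|]. split; [reflexivity|]. split; [reflexivity|].
        intros i Hi. simpl in Hi. assert (i = 1) by lia. subst. reflexivity.
      * intros r. cbn [app]. rewrite gcount_H by reflexivity. vm_compute. reflexivity.
    + split.
      * split; [reflexivity|]. split; [reflexivity|]. split; [reflexivity|].
        intros i Hi. simpl in Hi. assert (i = 1) by lia. subst. reflexivity.
      * intros r. cbn [app]. rewrite gcount_H by reflexivity. vm_compute. reflexivity.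
  - destruct l; discriminate H2.
  - assert (Hh : exists l0, c = [LA; l0] /\ isH l0 = true)
      by (destruct Hc as [-> | ->]; eexists; split; reflexivity).
    destruct Hh as [l0 [-> Hl0]]. simpl app.
    split.
    + destruct l; (split; [reflexivity|]; split; [reflexivity|]; split; [reflexivity|]);
      intros i Hi; simpl in Hi; (assert (i = 1 \/ i = 2 \/ i = 3) as [-> | [-> | ->]] by lia); reflexivity.
    + intros r. rewrite gcount_AH by auto. destruct l; vm_compute; reflexivity.
  - destruct s0 as [bs sec t cy ph]. cbn in Hph, Ht, Hc, FI. subst.
    assert (Hl : isH l = true \/ l = LA) by (destruct l; auto).
    destruct Hl as [Hl| ->].
    2:{ unfold step in H2'. rewrite mine_eq in H2'. discriminate H2'. }
    assert (Estep : step (S (S k)) (mkState bs sec 0 1 (Fork ach hch)) l =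
       if Nat.eqb (length ach - S (length hch)) 1
       then mkState (bs ++ [newblock (S (S k)) bs sec false 1 (hd 0 hch)]) [] (hd 0 ach) 2 Idle
       else mkState (bs ++ [newblock (S (S k)) bs sec false 1 (hd 0 hch)]) sec 0 1
              (Fork ach (length bs :: hch))).
    { destruct l; [discriminate|reflexivity|reflexivity]. }
    rewrite Estep in *.
    destruct (Nat.eqb (length ach - S (length hch)) 1) eqn:Eq; [|discriminate H2'].
    apply Nat.eqb_eq in Eq.
    pose proof (FInv_H (S (S k)) c bs ach hch sec l Hl FI) as FI'.
    split.
    + split; [reflexivity|]. split; [reflexivity|]. split; [reflexivity|].
      cbn [st_blocks]. apply (fi_cyc _ _ _ _ _ FI').
    + intros r. rewrite (release_W _ c bs ach hch sec l Hl FI).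
      destruct (pureb (c ++ [l])) eqn:P.
      * assert (EA : nA (c ++ [l]) = length ach).
        { rewrite nA_app, (fi_nA _ _ _ _ _ FI). destruct l; [discriminate| |]; simpl; lia. }
        assert (EH : nH (c ++ [l]) = pred (length ach)).
        { rewrite nH_app, <- (fi_nH _ _ _ _ _ FI). destruct l; [discriminate| |]; simpl; lia. }
        pose proof (pure_starts (c ++ [l]) r P) as St.
        rewrite EA, EH, <- app_assoc in St. cbn [app] in St.
        rewrite (gcount_one _ _ (length ach)); [| lia | exact St].
        reflexivity.
      * rewrite nonpure; auto.
Qed.

Theorem V_gcount n1 u m : 2 <= n1 -> 1 <= m -> acc u (S m) = true -> V n1 u = gcount n1 u.
Proof.
  intros Hn1 Hm Ha. apply acc_cnt in Ha as [_ Hc].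
  destruct (first_split u) as (c & l & r & -> & H1 & H2); [lia|].
  destruct (C1_end n1 c l Hn1 H1 H2) as [(F1 & F2 & F3 & F4) FW].
  rewrite V_Vst.
  assert (Er : run n1 (c ++ l :: r) = fold_left (step n1) r (run n1 (c ++ [l]))).
  { replace (c ++ l :: r) with ((c ++ [l]) ++ r) by (rewrite <- app_assoc; reflexivity).
    unfold run. rewrite fold_left_app. reflexivity. }
  rewrite Er. rewrite later_V; auto.
  - apply GI_run.
  - rewrite <- Er, cyc_run. lia.
Qed.

Open Scope R_scope.

Definition Hfn n1 m (N : nat) (u : list letter) : R :=
  if acc (firstn N u) (S m) then INR (gcount n1 (firstn N u)) else 0.

Lemma ext_lemma (p q g : R) (n1 m N M : nat) : p + q = 1 -> (N <= M)%nat ->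
  sumw N (fun v => if acc v (S m) then wprob p q g v * INR (gcount n1 v) else 0) =
  sumw M (fun u => wprob p q g u * Hfn n1 m N u).
Proof.
  intros Hpq HNM. replace M with (N + (M - N))%nat by lia.
  rewrite sumw_app. apply sumw_ext_in. intros v Hv.
  rewrite (sumw_ext _ _ (fun w => (wprob p q g v * Hfn n1 m N v) * wprob p q g w)).
  - rewrite sumw_scal, sumw_prob by auto. unfold Hfn. rewrite firstn_all2 by lia.
    destruct (acc v (S m)); ring.
  - intros w. rewrite wprob_app. unfold Hfn.
    replace (firstn N (v ++ w)) with v.
    + rewrite firstn_all2 by lia. ring.
    + rewrite firstn_app, firstn_all2 by lia. replace (N - length v)%nat with O by lia.
      simpl. rewrite app_nil_r. reflexivity.
Qed.

Lemma partial_sum (p q g : R) (n1 m M : nat) : p + q = 1 -> (2 <= n1)%nat -> (1 <= m)%nat ->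
  forall K, (K <= M)%nat ->
  sum_f_R0 (fun N => EV_term n1 p q g m N) K =
  sumw M (fun u => wprob p q g u * sum_f_R0 (fun N => Hfn n1 m N u) K).
Proof.
  intros Hpq Hn1 Hm.
  assert (EV : forall N, EV_term n1 p q g m N =
     sumw N (fun v => if acc v (S m) then wprob p q g v * INR (gcount n1 v) else 0)).
  { intros N. unfold EV_term. fold (sumw N (fun u => if complete_cycles n1 u (S m)
                   then (wprob p q g u * INR (V n1 u)) else 0)).
    apply sumw_ext. intros u. rewrite cc_acc. destruct (acc u (S m)) eqn:E; auto.
    rewrite (V_gcount n1 u m); auto; lia. }
  induction K as [|K IH]; intros HK.
  - simpl. rewrite EV. apply ext_lemma; auto.
  - simpl. rewrite IH by lia. rewrite EV, (ext_lemma p q g n1 m (S K) M) by auto.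
    rewrite <- sumw_plus. apply sumw_ext. intros u. ring.
Qed.

Lemma sum_zero_all (f : nat -> R) M : (forall N, (N <= M)%nat -> f N = 0) -> sum_f_R0 f M = 0.
Proof.
  intros H. induction M as [|M IH]; simpl.
  - apply H; lia.
  - rewrite IH by (intros; apply H; lia). rewrite H by lia. ring.
Qed.

Lemma sum_single (f : nat -> R) M N0 : (N0 <= M)%nat ->
  (forall N, (N <= M)%nat -> N <> N0 -> f N = 0) -> sum_f_R0 f M = f N0.
Proof.
  intros H1 H2. induction M as [|M IH].
  - assert (N0 = O) by lia. subst. reflexivity.
  - destruct (Nat.eq_dec N0 (S M)) as [->|Hne].
    + simpl. rewrite (sum_zero_all f M); [ring|]. intros N HN. apply H2; lia.
    + simpl. rewrite IH by (try lia; intros; apply H2; lia). rewrite (H2 (S M)) by lia. ring.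
Qed.

Lemma inner_bound (n1 m : nat) u (t : R) : (1 <= m)%nat -> 1 <= t ->
  0 <= INR (gcount n1 u) - sum_f_R0 (fun N => Hfn n1 m N u) (length u) <=
  t ^ (2 * nA u + m) / t ^ (length u).
Proof.
  intros Hm Ht. set (M := length u).
  assert (Tp : 0 < t ^ M) by (apply pow_lt; lra).
  assert (B0 : 0 <= t ^ (2 * nA u + m) / t ^ M).
  { apply Rmult_le_pos; [apply pow_le; lra|left; apply Rinv_0_lt_compat; auto]. }
  destruct (classic (exists N0, (N0 <= M)%nat /\ acc (firstn N0 u) (S m) = true)) as [[N0 [HN0 A0]]|NE].
  - rewrite (sum_single _ M N0 HN0).
    + unfold Hfn. rewrite A0. rewrite gcount_firstn; auto.
      * split; lra.
      * apply acc_cnt in A0. lia.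
    + intros N HN Hne. unfold Hfn. destruct (acc (firstn N u) (S m)) eqn:E; auto.
      exfalso. apply Hne. apply (acc_unique u (S m)); auto.
  - rewrite sum_zero_all.
    2:{ intros N HN. unfold Hfn. destruct (acc (firstn N u) (S m)) eqn:E; auto.
        exfalso. apply NE. exists N. auto. }
    pose proof (gcount_le1 n1 u) as G1. apply le_INR in G1. simpl in G1.
    pose proof (pos_INR (gcount n1 u)).
    assert (Hb : (M <= 2 * nA u + m)%nat).
    { pose proof (not_reached_bound u (S m)) as NR.
      assert (S (length u) <= 2 * nA u + S m)%nat; [|unfold M; lia].
      apply NR; [lia|]. intros N HN. destruct (acc (firstn N u) (S m)) eqn:E; auto.
      exfalso. apply NE. exists N. auto. }
    assert (1 <= t ^ (2 * nA u + m) / t ^ M).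
    { apply (Rmult_le_reg_r (t ^ M)); auto. unfold Rdiv. rewrite Rmult_assoc, Rinv_l by lra.
      rewrite Rmult_1_l, Rmult_1_r. apply Rle_pow; auto. }
    split; lra.
Qed.

Definition rsum (l : list R) : R := fold_right Rplus 0 l.

Lemma rsum_app l1 l2 : rsum (l1 ++ l2) = rsum l1 + rsum l2.
Proof. induction l1 as [|a l IH]; simpl; [ring|]. unfold rsum in *. simpl. rewrite IH. ring. Qed.

Lemma INR_count {A} (f : A -> bool) l :
  INR (length (filter f l)) = rsum (map (fun x => if f x then 1 else 0) l).
Proof.
  induction l as [|a l IH]; [reflexivity|].
  unfold rsum in *. cbn [filter map fold_right]. destruct (f a); cbn [length]; rewrite ?S_INR, IH; ring.
Qed.

Lemma sumw_rsum {A} n (P : list letter -> R) (gg : A -> list letter -> R) l :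
  sumw n (fun u => P u * rsum (map (fun L => gg L u) l)) =
  rsum (map (fun L => sumw n (fun u => P u * gg L u)) l).
Proof.
  induction l as [|a l IH]; simpl.
  - unfold rsum; simpl. rewrite (sumw_ext n _ (fun u => 0 * P u)) by (intros; ring).
    rewrite sumw_scal. ring.
  - unfold rsum in *. simpl. rewrite <- IH, <- sumw_plus. apply sumw_ext. intros; ring.
Qed.

Lemma closed_form p q k : p * q <> 1 ->
  rsum (map (fun L => q ^ L * p ^ pred L) (seq 2 k)) = p * q ^ 2 * (1 - (p * q) ^ k) / (1 - p * q).
Proof.
  intros Hpq. induction k as [|k IH].
  - simpl. unfold rsum; simpl. field. lra.
  - rewrite seq_S, map_app, rsum_app, IH. unfold rsum at 1. simpl.
    replace (2 + k)%nat with (S (S k)) by lia. simpl.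
    rewrite Rpow_mult_distr. field. lra.
Qed.

Lemma formula_sum p q g n1 M : p + q = 1 -> (2 * n1 <= M)%nat ->
  sumw M (fun u => wprob p q g u * INR (gcount n1 u)) =
  rsum (map (fun L => q ^ L * p ^ pred L) (seq 2 (n1 - 1))).
Proof.
  intros Hpq HM. unfold gcount.
  rewrite (sumw_ext M _ (fun u => wprob p q g u *
      rsum (map (fun L => if startsAH L (pred L) u then 1 else 0) (seq 2 (n1 - 1))))).
  2:{ intros u. rewrite INR_count. reflexivity. }
  rewrite (sumw_rsum M (wprob p q g) (fun L u => if startsAH L (pred L) u then 1 else 0)).
  f_equal. apply map_ext_in. intros L HL. apply in_seq in HL.
  apply sumw_startsAH; auto. lia.
Qed.

Lemma pow_div_distr x t n : t <> 0 -> x ^ n / t ^ n = (x / t) ^ n.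
Proof.
  intros Ht. induction n as [|n IH]; simpl; [field|]. rewrite <- IH. field. split; auto.
  apply pow_nonzero; auto.
Qed.

Lemma B_sum p q g m M t : 0 < t ->
  sumw M (fun u => wprob p q g u * (t ^ (2 * nA u + m) / t ^ M)) =
  t ^ m * ((q * t ^ 2 + p) / t) ^ M.
Proof.
  intros Ht.
  rewrite (sumw_ext M _ (fun u => (t ^ m / t ^ M) * (wprob p q g u * (t ^ 2) ^ nA u))).
  - rewrite sumw_scal, sumw_mgf. rewrite <- pow_div_distr by lra. unfold Rdiv. ring.
  - intros u. rewrite pow_add, <- pow_mult. unfold Rdiv. ring.
Qed.

Theorem proposition13 (p q gamma : R) (n1 m : nat) :
  0 < q -> q < p -> p + q = 1 -> 0 <= gamma <= 1 ->
  (2 <= n1)%nat -> (1 <= m)%nat ->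
  infinite_sum (fun N => EV_term n1 p q gamma m N)
    (p * q ^ 2 * (1 - (p * q) ^ (n1 - 1)) / (1 - p * q)).
Proof.
  intros Hq Hqp Hpq Hg Hn1 Hm.
  assert (Hp : 0 < p) by lra.
  assert (Hpq4 : p * q < 1 / 4) by nra.
  assert (Hpq1 : p * q <> 1) by lra.
  set (t := / (2 * q)).
  assert (Ht : 1 < t).
  { unfold t. rewrite <- Rinv_1. apply Rinv_lt_contravar; lra. }
  set (r := (q * t ^ 2 + p) / t).
  assert (Hr : r = 1 / 2 + 2 * p * q).
  { unfold r, t. field. lra. }
  assert (Hr0 : 0 < r) by nra.
  assert (Hr1 : r < 1) by nra.
  intros eps Heps.
  assert (Htm : 0 < t ^ m) by (apply pow_lt; lra).
  destruct (pow_lt_1_zero r ltac:(rewrite Rabs_right; lra) (eps / t ^ m)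
              ltac:(apply Rdiv_lt_0_compat; lra)) as [N0 HN0].
  exists (Nat.max N0 (2 * n1)). intros M HM.
  unfold Rdist. rewrite (partial_sum p q gamma n1 m M Hpq Hn1 Hm M) by lia.
  rewrite <- (closed_form p q (n1 - 1) Hpq1).
  rewrite <- (formula_sum p q gamma n1 M Hpq) by lia.
  set (P := wprob p q gamma).
  assert (HP : forall u, 0 <= P u) by (intros; apply wprob_nonneg; lra).
  assert (D1 : 0 <= sumw M (fun u => P u * INR (gcount n1 u)) -
                    sumw M (fun u => P u * sum_f_R0 (fun N => Hfn n1 m N u) M)).
  { assert (sumw M (fun u => P u * sum_f_R0 (fun N => Hfn n1 m N u) M) <=
            sumw M (fun u => P u * INR (gcount n1 u))); [|lra].
    apply sumw_le_in. intros u Hu. apply Rmult_le_compat_l; auto.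
    destruct (inner_bound n1 m u t Hm ltac:(lra)) as [B1 _]. rewrite Hu in B1. lra. }
  assert (D2 : sumw M (fun u => P u * INR (gcount n1 u)) -
               sumw M (fun u => P u * sum_f_R0 (fun N => Hfn n1 m N u) M) <= t ^ m * r ^ M).
  { unfold r. rewrite <- (B_sum p q gamma m M t) by lra. fold P.
    assert (sumw M (fun u => P u * INR (gcount n1 u)) <=
            sumw M (fun u => P u * sum_f_R0 (fun N => Hfn n1 m N u) M +
                             P u * (t ^ (2 * nA u + m) / t ^ M))).
    { apply sumw_le_in. intros u Hu.
      destruct (inner_bound n1 m u t Hm ltac:(lra)) as [_ B2]. rewrite Hu in B2.
      specialize (HP u). nra. }
    rewrite sumw_plus in H. lra. }
  assert (Hrm : r ^ M < eps / t ^ m).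
  { specialize (HN0 M ltac:(lia)). rewrite Rabs_right in HN0; auto.
    apply Rle_ge, pow_le; lra. }
  assert (t ^ m * r ^ M < eps).
  { apply (Rmult_lt_compat_l (t ^ m)) in Hrm; auto.
    replace (t ^ m * (eps / t ^ m)) with eps in Hrm by (field; lra). lra. }
  rewrite Rabs_left1 by lra. lra.
Qed.
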